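(* Let $C$ be a bivariate copula that is stochastically increasing (SI) or stochastically decreasing (SD). Then \[ \xi(C)\le|\rho(C)|, \] with equality if and only if $C\in\{W,\Pi,M\}$, where $W(u,v)=\max\{u+v-1,0\}$, $\Pi(u,v)=uv$ and $M(u,v)=\min\{u,v\}$.
   Context: A (bivariate) copula is a function $C:[0,1]^2\to[0,1]$ that is grounded, has uniform margins and is 2-increasing. For a copula $C$, $\rho(C)=12\int_{[0,1]^2}C(u,v)\,du\,dv-3$ (Spearman's rho) and $\xi(C)=6\int_0^1\int_0^1(\partial_1C(t,v))^2\,dt\,dv-2$ (Chatterjee's xi), with $\partial_1$ the partial derivative in the first argument. A copula $C$ is SI (resp. SD) if, for $(U,V)\sim C$, the map $u\mapsto P(V\ge v\mid U=u)$ is increasing (resp. decreasing) outside a Lebesgue null set for every $v$; equivalently, $C(\cdot,v)$ is concave (resp. convex) for every $v\in[0,1]$. *)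

(* Defs.v *)
From Stdlib Require Import Reals.
From Coquelicot Require Import Coquelicot.
Open Scope R_scope.

Definition I01 (x : R) : Prop := 0 <= x <= 1.

(* A bivariate copula, given as a total function R -> R -> R whose values
   on [0,1]^2 are the relevant ones. *)
Definition is_copula (C : R -> R -> R) : Prop :=
  (forall u v, I01 u -> I01 v -> 0 <= C u v <= 1) /\
  (forall u, I01 u -> C u 0 = 0) /\
  (forall v, I01 v -> C 0 v = 0) /\
  (forall u, I01 u -> C u 1 = u) /\
  (forall v, I01 v -> C 1 v = v) /\
  (forall u1 u2 v1 v2, I01 u1 -> I01 u2 -> I01 v1 -> I01 v2 ->
     u1 <= u2 -> v1 <= v2 ->
     0 <= C u2 v2 - C u2 v1 - C u1 v2 + C u1 v1).

Definition is_SI (C : R -> R -> R) : Prop :=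
  forall v, I01 v -> forall x y l, I01 x -> I01 y -> I01 l ->
    l * C x v + (1 - l) * C y v <= C (l * x + (1 - l) * y) v.

Definition is_SD (C : R -> R -> R) : Prop :=
  forall v, I01 v -> forall x y l, I01 x -> I01 y -> I01 l ->
    C (l * x + (1 - l) * y) v <= l * C x v + (1 - l) * C y v.

Definition d1 (C : R -> R -> R) (t v : R) : R := Derive (fun s => C s v) t.

Definition rho (C : R -> R -> R) : R :=
  12 * RInt (fun v => RInt (fun u => C u v) 0 1) 0 1 - 3.

Definition xi (C : R -> R -> R) : R :=
  6 * RInt (fun v => RInt (fun t => (d1 C t v) ^ 2) 0 1) 0 1 - 2.

Definition W (u v : R) : R := Rmax (u + v - 1) 0.
Definition Pi (u v : R) : R := u * v.
Definition M (u v : R) : R := Rmin u v.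

Definition eq_on_square (C D : R -> R -> R) : Prop :=
  forall u v, I01 u -> I01 v -> C u v = D u v.

(* Main.v *)
Require Import Defs.
From Stdlib Require Import Reals.
From Stdlib Require Import Lra Lia Psatz ZArith Classical.
From Coquelicot Require Import Coquelicot.
Require Import Defs.
Open Scope R_scope.

Fixpoint sm (g : nat -> R) (n : nat) : R :=
  match n with O => 0 | S k => sm g k + g k end.

Lemma sm_S g n : sm g (S n) = sm g n + g n.
Proof. reflexivity. Qed.
Lemma sm_ext g h n : (forall i, (i < n)%nat -> g i = h i) -> sm g n = sm h n.
Proof. induction n; simpl; intros H; auto. rewrite IHn; [|intros; apply H; lia]. rewrite H; auto. Qed.
Lemma sm_plus g h n : sm (fun i => g i + h i) n = sm g n + sm h n.
Proof. induction n; simpl; [lra|]. rewrite IHn; lra. Qed.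
Lemma sm_scal c g n : sm (fun i => c * g i) n = c * sm g n.
Proof. induction n; simpl; [lra|]. rewrite IHn; lra. Qed.
Lemma sm_const c n : sm (fun _ => c) n = INR n * c.
Proof. induction n; simpl sm; [simpl; lra|]. rewrite IHn, S_INR; lra. Qed.
Lemma sm_le g h n : (forall i, (i<n)%nat -> g i <= h i) -> sm g n <= sm h n.
Proof. induction n; simpl; intros H; [lra|]. assert (g n <= h n) by (apply H; lia).
 assert (sm g n <= sm h n) by (apply IHn; intros; apply H; lia). lra. Qed.
Lemma sm_ge0 g n : (forall i, (i<n)%nat -> 0 <= g i) -> 0 <= sm g n.
Proof. intros H. replace 0 with (sm (fun _ => 0) n). apply sm_le; auto. rewrite sm_const; lra. Qed.
Lemma sm_shift g n : sm (fun i => g (S i)) n = sm g (S n) - g O.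
Proof. induction n; simpl in *; [lra|]. rewrite IHn; lra. Qed.
Lemma sm_tele F n : sm (fun i => F (S i) - F i) n = F n - F O.
Proof. induction n; simpl; [lra|]. rewrite IHn; lra. Qed.
Lemma sm_rev g n : sm (fun i => g (n - 1 - i)%nat) n = sm g n.
Proof. revert g; induction n; intros g; [reflexivity|].
 simpl sm at 1. replace (n - 0 - n)%nat with O by lia.
 assert (E: sm (fun i => g (n - 0 - i)%nat) n = sm (fun i => (fun k => g (S k)) (n - 1 - i)%nat) n).
 { apply sm_ext. intros i Hi. f_equal. lia. }
 rewrite E, (IHn (fun k => g (S k))), sm_shift. lra. Qed.
Lemma sm_shiftk g k0 N : sm (fun i => g (k0+i)%nat) N = sm g (k0+N) - sm g k0.
Proof. induction N; simpl. rewrite Nat.add_0_r; lra.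
 rewrite IHN. replace (k0 + S N)%nat with (S (k0+N)) by lia. simpl. lra. Qed.
Lemma sm_mono g m n : (forall i, (i<n)%nat -> 0 <= g i) -> (m <= n)%nat -> sm g m <= sm g n.
Proof. intros H Hm. induction n. replace m with O by lia; lra.
 destruct (Nat.eq_dec m (S n)) as [E|E]. rewrite E; lra.
 simpl. assert (0 <= g n) by (apply H; lia). assert (sm g m <= sm g n) by (apply IHn; [intros; apply H; lia|lia]). lra. Qed.
Lemma sm_sub_ge g n k0 N : (forall i, (i<n)%nat -> 0 <= g i) -> (k0 + N <= n)%nat ->
  sm (fun i => g (k0+i)%nat) N <= sm g n.
Proof. intros H Hn. rewrite sm_shiftk.
 assert (0 <= sm g k0) by (apply sm_ge0; intros; apply H; lia).
 assert (sm g (k0+N) <= sm g n) by (apply sm_mono; auto). lra. Qed.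

Definition phi (x : R) := x * (1 - x).

Lemma sm_phi a x m : sm (fun i => phi (a i - x)) m =
  (1 + 2*x) * sm a m - sm (fun i => a i ^ 2) m - INR m * (x + x^2).
Proof.
 rewrite (sm_ext _ (fun i => (1 + 2*x) * a i + ((-1) * (a i ^ 2) + (- (x + x^2))))).
 2:{ intros; unfold phi; ring. }
 rewrite sm_plus, sm_plus, sm_scal, sm_scal, sm_const. ring. Qed.

Definition slack (a : nat -> R) (m : nat) := sm (fun j => sm (fun i => phi (a i - a j)) j) m.

Lemma disc_id a m : INR m * sm (fun i => a i ^ 2) m - (sm a m)^2
  - sm (fun i => (INR m - 1 - 2*INR i) * a i) m + slack a m = 0.
Proof.
 unfold slack; induction m; [simpl; lra|].
 rewrite !sm_S. rewrite sm_phi.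
 rewrite (sm_ext (fun i => (INR (S m) - 1 - 2 * INR i) * a i) (fun i => (INR m - 1 - 2 * INR i) * a i + a i)).
 2:{ intros; rewrite S_INR; ring. }
 rewrite sm_plus. rewrite S_INR. 
 set (A := sm (fun i => a i ^ 2) m) in *. set (B := sm a m) in *.
 set (Cc := sm (fun i => (INR m - 1 - 2 * INR i) * a i) m) in *.
 set (Dd := sm (fun j => sm (fun i => phi (a i - a j)) j) m) in *.
 nra.
Qed.

Lemma sm_sm a n : sm (fun k => sm a k) n = sm (fun i => (INR n - 1 - INR i) * a i) n.
Proof. induction n; [reflexivity|]. rewrite sm_S, IHn.
 rewrite !sm_S. rewrite (sm_ext (fun i => (INR (S n) - 1 - INR i) * a i) (fun i => (INR n - 1 - INR i) * a i + a i)).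
 2:{ intros; rewrite S_INR; ring. } rewrite sm_plus, S_INR. ring. Qed.

Definition slopes (F : nat -> R) (n : nat) := fun i => INR n * (F (S i) - F i).

Lemma disc_main (F : nat -> R) n : (1 <= n)%nat -> F O = 0 ->
  INR n * sm (fun i => slopes F n i ^ 2) n =
  INR n ^ 2 * F n ^ 2 + 2 * INR n * sm F n - INR n * (INR n - 1) * F n - slack (slopes F n) n.
Proof.
 intros Hn H0. pose proof (disc_id (slopes F n) n) as E.
 assert (Ha : sm (slopes F n) n = INR n * F n).
 { unfold slopes. rewrite sm_scal, sm_tele, H0. ring. }
 assert (HF : INR n * sm F n = sm (fun i => (INR n - 1 - INR i) * slopes F n i) n).
 { rewrite <- sm_sm. rewrite <- sm_scal. apply sm_ext. intros k _.
   unfold slopes. rewrite sm_scal, sm_tele, H0. ring. }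
 rewrite (sm_ext (fun i => (INR n - 1 - 2 * INR i) * slopes F n i)
   (fun i => 2 * ((INR n - 1 - INR i) * slopes F n i) + (-(INR n - 1)) * slopes F n i)) in E.
 2:{ intros; ring. }
 rewrite sm_plus, sm_scal, sm_scal, <- HF, Ha in E. nra.
Qed.

Lemma slack_ge0 a n : (forall i j, (i < j < n)%nat -> 0 <= a i - a j <= 1) -> 0 <= slack a n.
Proof. intros H. unfold slack. apply sm_ge0. intros j Hj. apply sm_ge0. intros i Hi.
 unfold phi. destruct (H i j) as [H1 H2]; [lia|]. nra. Qed.

Lemma unif_nth a b n i : (i <= S n)%nat ->
  seq.nth 0 (unif_part a b n) i = a + INR i * (b - a) / (INR n + 1).
Proof. intros H. unfold unif_part. rewrite seq.nth_mkseq; auto. apply SSR_leq. lia. Qed.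

Lemma rsum_unif (g : R -> R) (f : R -> R) (d : R) :
  (forall x y, y - x = d -> g ((x + y)/2) = f y - f x) ->
  forall n a b, b - a = (INR n + 1) * d ->
  Riemann_sum g (SF_seq_f2 (fun x y => (x + y) / 2) (unif_part a b n)) = d * (f b - f a).
Proof.
 intros Hg n. induction n; intros a b Hab.
 - unfold unif_part, seq.mkseq. simpl. unfold Riemann_sum, SF_seq_f2. simpl.
   change (scal ?x ?y) with (x * y). change (plus ?x ?y) with (x + y). change (@zero R_ModuleSpace) with 0.
   simpl in Hab. rewrite Hg.
   + replace (a + 1 * (b - a) / (0 + 1)) with b by field. replace (a + 0 * (b - a) / (0+1)) with a by field.
     replace (b - a) with d by lra. ring.
   + field_simplify. lra.
 - rewrite unif_part_S. rewrite SF_cons_f2.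
   2:{ unfold unif_part. rewrite seq.size_mkseq. lia. }
   rewrite Riemann_sum_cons.
   rewrite head_unif_part.
   set (a' := (a * INR (S n) + b) / INR (S (S n))).
   assert (Ha' : b - a' = (INR n + 1) * d).
   { unfold a'. rewrite !S_INR. rewrite S_INR in Hab. pose proof (pos_INR n).
     apply (Rmult_eq_reg_r (INR n + 1 + 1)); [|lra].
     field_simplify; [|lra]. nra. }
   assert (E: SF_h (SF_seq_f2 (fun x y => (x + y)/2) (unif_part a' b n)) = a').
   { unfold SF_seq_f2; simpl. apply (head_unif_part 0). }
   rewrite E. simpl fst. simpl snd. rewrite IHn by exact Ha'.
   change (scal ?x ?y) with (x * y). change (plus ?x ?y) with (x + y).
   assert (Hd : a' - a = d). { rewrite S_INR in Hab. lra. }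
   rewrite Hg by lra. rewrite Hd. assert (X: d * (f a' - f a) + d * (f b - f a') = d * (f b - f a)) by ring. exact X.
Qed.

Lemma nat_large (x : R) : {n : nat | x < INR n}.
Proof. exists (Z.to_nat (up (Rabs x))). destruct (archimed (Rabs x)) as [H1 H2].
 pose proof (Rle_abs x). pose proof (Rabs_pos x).
 rewrite INR_IZR_INZ, Z2Nat.id; [lra|]. apply le_IZR. lra. Qed.

Lemma mono_RI f a b : a <= b -> (forall x y, a <= x -> x <= y -> y <= b -> f x <= f y) ->
  Riemann_integrable f a b.
Proof.
 intros Hab Hm eps.
 set (K := (b - a) * (f b - f a)).
 assert (HK : 0 <= K). { unfold K. assert (f a <= f b) by (apply Hm; nra). nra. }
 assert (He := cond_pos eps).
 destruct (nat_large (K / eps)) as [n Hn].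
 set (d := (b - a) / (INR n + 1)).
 pose proof (pos_INR n) as Hn0.
 exists (sf_SF_val_fun f a b n). exists (sf_SF_val_fun (fun y => f (y + d/2) - f (y - d/2)) a b n).
 split.
 - intros t Ht. rewrite Rmin_left, Rmax_right in Ht by lra.
   unfold sf_SF_val_fun. destruct (Rle_dec a b) as [H|H]; [|lra]. simpl.
   rewrite (SF_val_fun_rw f a b n t Ht), (SF_val_fun_rw _ a b n t Ht).
   assert (Hq : forall X, a + X * (b - a) / (INR n + 1) = a + X * d) by (intros; unfold d, Rdiv; ring).
   assert (Hd0 : 0 <= d) by (unfold d; apply Rmult_le_pos; [lra|apply Rlt_le, Rinv_0_lt_compat; lra]).
   assert (Hnd : (INR n + 1) * d = b - a) by (unfold d; field; lra).
   destruct (unif_part_nat a b n t Ht) as [[i [Hi Hs]] | Hi]; simpl.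
   + unfold unif_part in Hs. rewrite seq.size_mkseq in Hs.
     rewrite !unif_nth in Hi by lia. replace (INR (S i)) with (INR i + 1) in Hi by (rewrite S_INR; auto). repeat rewrite Hq in Hi. repeat rewrite Hq.
     set (m := a + (INR i + / 2) * d).
     assert (E1 : m + d/2 = a + (INR i + 1) * d) by (unfold m; field).
     assert (E2 : m - d/2 = a + INR i * d) by (unfold m; field).
     rewrite E1, E2.
     assert (Hi1 : (S i <= n)%nat) by lia. apply le_INR in Hi1. rewrite S_INR in Hi1.
     pose proof (pos_INR i).
     assert (a <= a + INR i * d) by nra.
     assert (a + (INR i + 1) * d <= b) by nra.
     assert (Hm1: a + INR i * d <= m) by (unfold m; nra).
     assert (Hm2: m <= a + (INR i + 1) * d) by (unfold m; nra).
     assert (f (a + INR i * d) <= f t) by (apply Hm; nra).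
     assert (f t <= f (a + (INR i + 1) * d)) by (apply Hm; nra).
     assert (f (a + INR i * d) <= f m) by (apply Hm; nra).
     assert (f m <= f (a + (INR i + 1) * d)) by (apply Hm; nra).
     apply Rabs_le; lra.
   + rewrite !unif_nth in Hi by lia. rewrite S_INR in Hi. repeat rewrite Hq in Hi. repeat rewrite Hq.
     set (m := a + (INR n + / 2) * d).
     assert (E1 : m + d/2 = b) by (unfold m; lra).
     assert (E2 : m - d/2 = a + INR n * d) by (unfold m; field).
     rewrite E1, E2.
     assert (a <= a + INR n * d) by nra.
     assert (Hm1: a + INR n * d <= m) by (unfold m; nra).
     assert (Hm2: m <= b) by (unfold m; nra).
     assert (f (a + INR n * d) <= f t) by (apply Hm; nra).
     assert (f t <= f b) by (apply Hm; nra).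
     assert (f (a + INR n * d) <= f m) by (apply Hm; nra).
     assert (f m <= f b) by (apply Hm; nra).
     apply Rabs_le; lra.
 - rewrite <- RInt_val_Reals. unfold RInt_val.
   rewrite (rsum_unif _ f d).
   + assert (HK2 : K < eps * (INR n + 1)).
     { assert (K = (K/eps)*eps) by (field; lra). nra. }
     replace (d * (f b - f a)) with (K / (INR n + 1)) by (unfold K, d; field; lra).
     rewrite Rabs_pos_eq.
     * apply (Rmult_lt_reg_r (INR n + 1)); [lra|].
       replace (K / (INR n + 1) * (INR n + 1)) with K by (field; lra). lra.
     * apply Rmult_le_pos; [lra|]. apply Rlt_le, Rinv_0_lt_compat; lra.
   + intros x y Hxy. f_equal; f_equal; lra.
   + unfold d. field. lra.
Qed.

Lemma mono_ex_RInt f a b : a <= b -> (forall x y, a <= x -> x <= y -> y <= b -> f x <= f y) ->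
  ex_RInt f a b.
Proof. intros; apply ex_RInt_Reals_1, mono_RI; auto. Qed.

Lemma anti_ex_RInt f a b : a <= b -> (forall x y, a <= x -> x <= y -> y <= b -> f y <= f x) ->
  ex_RInt f a b.
Proof. intros Hab H.
 assert (ex_RInt (fun x => - f x) a b) by (apply mono_ex_RInt; auto; intros; apply Ropp_le_contravar; auto).
 apply (ex_RInt_ext (fun x => - - f x)). intros; exact (Ropp_involutive _).
 apply (ex_RInt_opp (fun x => - f x)) in H0. exact H0. Qed.

Definition Sl (f : R -> R) x y := (f y - f x) / (y - x).
Definition conc (f : R -> R) := forall x y l, I01 x -> I01 y -> I01 l ->
  l * f x + (1 - l) * f y <= f (l * x + (1 - l) * y).

Lemma div_le_cross A B p q : 0 < p -> 0 < q -> A * q <= B * p -> A / p <= B / q.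
Proof. intros Hp Hq H. apply (Rmult_le_reg_r (p * q)). nra.
 replace (A / p * (p * q)) with (A * q) by (field; lra).
 replace (B / q * (p * q)) with (B * p) by (field; lra). lra. Qed.

Lemma three_chord f : conc f -> forall x y z, 0 <= x -> x < y -> y < z -> z <= 1 ->
  Sl f x z <= Sl f x y /\ Sl f y z <= Sl f x z.
Proof.
 intros Hc x y z H0 H1 H2 H3.
 set (l := (z - y) / (z - x)).
 assert (Hl : I01 l). { unfold l, I01. split. apply Rmult_le_pos; [lra|]. apply Rlt_le, Rinv_0_lt_compat; lra.
   apply (Rmult_le_reg_r (z - x)); [lra|]. field_simplify; lra. }
 assert (Hy : l * x + (1 - l) * z = y) by (unfold l; field; lra).
 pose proof (Hc x z l) as Hc'. rewrite Hy in Hc'.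
 assert (Hcc : l * f x + (1 - l) * f z <= f y) by (apply Hc'; unfold I01; auto; lra).
 assert (Hk : (z - y) * f x + (y - x) * f z <= (z - x) * f y).
 { unfold l in Hcc. apply (Rmult_le_compat_l (z - x)) in Hcc; [|lra].
   replace ((z - x) * ((z - y) / (z - x) * f x + (1 - (z - y) / (z - x)) * f z))
     with ((z - y) * f x + (y - x) * f z) in Hcc by (field; lra). lra. }
 unfold Sl. split; apply div_le_cross; nra.
Qed.

Lemma chord_mono f : conc f -> forall a b c d, 0 <= a -> a < b -> c < d -> d <= 1 -> a <= c -> b <= d ->
  Sl f c d <= Sl f a b.
Proof.
 intros Hc a b c d Ha Hab Hcd Hd Hac Hbd.
 assert (E1 : Sl f a d <= Sl f a b).
 { destruct (Req_dec b d) as [E|E]. subst; lra. apply (three_chord f Hc a b d); lra. }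
 assert (E2 : Sl f c d <= Sl f a d).
 { destruct (Req_dec a c) as [E|E]. subst; lra. apply (three_chord f Hc a c d); lra. }
 lra.
Qed.

Section Cop.
Variable C : R -> R -> R.
Hypothesis HC : is_copula C.

Lemma cop_2inc u1 u2 v1 v2 : I01 u1 -> I01 u2 -> I01 v1 -> I01 v2 -> u1 <= u2 -> v1 <= v2 ->
  C u2 v1 - C u1 v1 <= C u2 v2 - C u1 v2.
Proof. intros. destruct HC as (_ & _ & _ & _ & _ & Hinc). intros; assert (X := Hinc u1 u2 v1 v2 H H0 H1 H2 H3 H4). lra. Qed.

Lemma cop_mono_u u1 u2 v : I01 u1 -> I01 u2 -> I01 v -> u1 <= u2 -> C u1 v <= C u2 v.
Proof. intros. destruct HC as (_ & Hg1 & _ & _ & _ & _).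
 pose proof (cop_2inc u1 u2 0 v H H0 ltac:(unfold I01; lra) H1 H2 ltac:(unfold I01 in *; lra)).
 rewrite !Hg1 in H3 by auto. lra. Qed.

Lemma cop_lip_u u1 u2 v : I01 u1 -> I01 u2 -> I01 v -> u1 <= u2 -> C u2 v - C u1 v <= u2 - u1.
Proof. intros. destruct HC as (_ & _ & _ & Hm1 & _ & _).
 pose proof (cop_2inc u1 u2 v 1 H H0 H1 ltac:(unfold I01; lra) H2 ltac:(unfold I01 in *; lra)).
 rewrite !Hm1 in H3 by auto. lra. Qed.

Lemma cop_mono_v u v1 v2 : I01 u -> I01 v1 -> I01 v2 -> v1 <= v2 -> C u v1 <= C u v2.
Proof. intros. destruct HC as (_ & _ & Hg2 & _ & _ & _).
 pose proof (cop_2inc 0 u v1 v2 ltac:(unfold I01; lra) H H0 H1 ltac:(unfold I01 in *; lra) H2).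
 rewrite !Hg2 in H3 by auto. lra. Qed.

Lemma cop_lip_v u v1 v2 : I01 u -> I01 v1 -> I01 v2 -> v1 <= v2 -> C u v2 - C u v1 <= v2 - v1.
Proof. intros. destruct HC as (_ & _ & _ & _ & Hm2 & _).
 pose proof (cop_2inc u 1 v1 v2 H ltac:(unfold I01; lra) H0 H1 ltac:(unfold I01 in *; lra) H2).
 rewrite !Hm2 in H3 by auto. lra. Qed.

Lemma cop_bounds u v : I01 u -> I01 v -> 0 <= C u v <= 1.
Proof. intros. destruct HC as (Hb & _). auto. Qed.

Lemma Sl_bounds v x y : I01 v -> 0 <= x -> x < y -> y <= 1 -> 0 <= Sl (fun s => C s v) x y <= 1.
Proof. intros Hv H0 H1 H2. unfold Sl.
 assert (C x v <= C y v) by (apply cop_mono_u; unfold I01; auto; lra).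
 assert (C y v - C x v <= y - x) by (apply cop_lip_u; unfold I01; auto; lra).
 split. apply Rmult_le_pos; [lra|]. apply Rlt_le, Rinv_0_lt_compat; lra.
 apply (Rmult_le_reg_r (y - x)); [lra|]. field_simplify; lra. Qed.

End Cop.

Lemma small_eta e : 0 < e -> exists N : nat, forall n, (N <= n)%nat -> 0 < / (INR n + 1) <= e.
Proof. intros He. destruct (archimed (/ e)) as [H1 _].
 assert (0 <= IZR (up (/ e))). { pose proof (Rinv_0_lt_compat e He). lra. }
 exists (Z.to_nat (up (/ e))). intros n Hn. apply le_INR in Hn.
 rewrite INR_IZR_INZ, Z2Nat.id in Hn by (apply le_IZR; lra).
 pose proof (pos_INR n). split. apply Rinv_0_lt_compat; lra.
 rewrite <- (Rinv_inv e). apply Rinv_le_contravar. apply Rinv_0_lt_compat; lra. lra. Qed.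

Lemma lim_bounds (u : nat -> R) lo hi : eventually (fun n => lo <= u n <= hi) ->
  Lim_seq u = Finite (real (Lim_seq u)) /\ lo <= real (Lim_seq u) <= hi.
Proof. intros [N HN].
 assert (A : Rbar_le (Lim_seq (fun _ => lo)) (Lim_seq u)).
 { apply Lim_seq_le_loc. exists N. intros; apply HN; auto. }
 assert (B : Rbar_le (Lim_seq u) (Lim_seq (fun _ => hi))).
 { apply Lim_seq_le_loc. exists N. intros; apply HN; auto. }
 rewrite Lim_seq_const in A, B.
 destruct (Lim_seq u); simpl in *; try contradiction. auto. Qed.

Lemma lim_le (u w : nat -> R) lo hi : eventually (fun n => lo <= u n <= hi) ->
  eventually (fun n => lo <= w n <= hi) -> eventually (fun n => u n <= w n) ->
  real (Lim_seq u) <= real (Lim_seq w).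
Proof. intros Hu Hw Huw. destruct (lim_bounds u lo hi Hu) as [Eu _].
 destruct (lim_bounds w lo hi Hw) as [Ew _].
 pose proof (Lim_seq_le_loc u w Huw) as H. rewrite Eu, Ew in H. exact H. Qed.

Definition Qd (f : R -> R) t n := (f (t + (0 + / (INR n + 1))) - f t) / (0 + / (INR n + 1)).

Lemma Derive_eq f t : Derive f t = real (Lim_seq (Qd f t)).
Proof. reflexivity. Qed.

Lemma Derive_bounds f t lo hi e : 0 < e ->
  (forall h, 0 < h <= e -> lo <= (f (t + h) - f t) / h <= hi) -> lo <= Derive f t <= hi.
Proof. intros He H. rewrite Derive_eq. apply (lim_bounds _ lo hi).
 destruct (small_eta e He) as [N HN]. exists N. intros n Hn. unfold Qd.
 rewrite Rplus_0_l. apply H. apply HN; auto. Qed.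

Lemma Derive_le2 f g t lo hi e : 0 < e ->
  (forall h, 0 < h <= e -> lo <= (f (t + h) - f t) / h <= hi) ->
  (forall h, 0 < h <= e -> lo <= (g (t + h) - g t) / h <= hi) ->
  (forall h, 0 < h <= e -> (f (t + h) - f t) / h <= (g (t + h) - g t) / h) ->
  Derive f t <= Derive g t.
Proof. intros He Hf Hg Hfg. rewrite !Derive_eq.
 destruct (small_eta e He) as [N HN].
 apply (lim_le _ _ lo hi); exists N; intros n Hn; unfold Qd; rewrite Rplus_0_l;
   [apply Hf|apply Hg|apply Hfg]; apply HN; auto. Qed.

Lemma ex_RInt_sub (g : R -> R) x y : ex_RInt g 0 1 -> 0 <= x <= y -> y <= 1 -> ex_RInt g x y.
Proof. intros H Hx Hy. apply (ex_RInt_Chasles_2 g 0 x y). lra.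
 apply (ex_RInt_Chasles_1 g 0 y 1). lra. exact H. Qed.

Lemma RInt_Chasles_R (g : R -> R) a b c : ex_RInt g a b -> ex_RInt g b c -> RInt g a c = RInt g a b + RInt g b c.
Proof. intros H1 H2. rewrite <- (RInt_Chasles g a b c H1 H2). reflexivity. Qed.

Lemma RInt_const_R (c : R) a b : RInt (fun _ => c) a b = (b - a) * c.
Proof. rewrite RInt_const. reflexivity. Qed.

Lemma grid_le k n : (1 <= n)%nat -> (k <= n)%nat -> 0 <= INR k / INR n <= 1.
Proof. intros Hn Hk. apply le_INR in Hn, Hk. simpl in Hn. split.
 apply Rmult_le_pos; [apply pos_INR|]. apply Rlt_le, Rinv_0_lt_compat; lra.
 apply (Rmult_le_reg_r (INR n)); [lra|]. field_simplify; lra. Qed.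

Lemma grid_lt k n : (1 <= n)%nat -> INR k / INR n < INR (S k) / INR n.
Proof. intros Hn. apply le_INR in Hn. simpl in Hn. rewrite S_INR.
 apply (Rmult_lt_reg_r (INR n)); [lra|]. field_simplify; lra. Qed.

Lemma cell_upper (g : R -> R) n B : (1 <= n)%nat -> ex_RInt g 0 1 ->
  (forall i, (i < n)%nat -> forall t, INR i / INR n < t < INR (S i) / INR n -> g t <= B i) ->
  RInt g 0 1 <= sm B n / INR n.
Proof.
 intros Hn Hg HB. pose proof (le_INR _ _ Hn) as Hn'. simpl in Hn'.
 assert (forall k, (k <= n)%nat -> RInt g 0 (INR k / INR n) <= sm B k / INR n).
 { induction k; intros Hk.
   - simpl. replace (0 / INR n) with 0 by (field; lra). replace (RInt g 0 0) with 0 by (rewrite RInt_point; reflexivity). unfold Rdiv; lra.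
   - pose proof (grid_le k n Hn ltac:(lia)). pose proof (grid_le (S k) n Hn Hk). pose proof (grid_lt k n Hn).
     rewrite (RInt_Chasles_R g 0 (INR k / INR n)).
     2,3: apply ex_RInt_sub; auto; lra.
     assert (RInt g (INR k / INR n) (INR (S k) / INR n) <= RInt (fun _ => B k) (INR k / INR n) (INR (S k) / INR n)).
     { apply RInt_le. lra. apply ex_RInt_sub; auto; lra. apply ex_RInt_const.
       intros; apply HB; auto. }
     rewrite RInt_const_R in H2. rewrite sm_S.
     replace ((INR (S k) / INR n - INR k / INR n) * B k) with (B k / INR n) in H2 by (rewrite S_INR; field; lra).
     assert (RInt g 0 (INR k / INR n) <= sm B k / INR n) by (apply IHk; lia).
     replace ((sm B k + B k) / INR n) with (sm B k / INR n + B k / INR n) by (field; lra). lra. }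
 specialize (H n (le_n n)). replace (INR n / INR n) with 1 in H by (field; lra). exact H.
Qed.

Lemma cell_lower (g : R -> R) n B : (1 <= n)%nat -> ex_RInt g 0 1 ->
  (forall i, (i < n)%nat -> forall t, INR i / INR n < t < INR (S i) / INR n -> B i <= g t) ->
  sm B n / INR n <= RInt g 0 1.
Proof.
 intros Hn Hg HB. pose proof (le_INR _ _ Hn) as Hn'. simpl in Hn'.
 assert (forall k, (k <= n)%nat -> sm B k / INR n <= RInt g 0 (INR k / INR n)).
 { induction k; intros Hk.
   - simpl. replace (0 / INR n) with 0 by (field; lra). replace (RInt g 0 0) with 0 by (rewrite RInt_point; reflexivity). unfold Rdiv; lra.
   - pose proof (grid_le k n Hn ltac:(lia)). pose proof (grid_le (S k) n Hn Hk). pose proof (grid_lt k n Hn).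
     rewrite (RInt_Chasles_R g 0 (INR k / INR n)).
     2,3: apply ex_RInt_sub; auto; lra.
     assert (RInt (fun _ => B k) (INR k / INR n) (INR (S k) / INR n) <= RInt g (INR k / INR n) (INR (S k) / INR n)).
     { apply RInt_le. lra. apply ex_RInt_const. apply ex_RInt_sub; auto; lra.
       intros; apply HB; auto. }
     rewrite RInt_const_R in H2. rewrite sm_S.
     replace ((INR (S k) / INR n - INR k / INR n) * B k) with (B k / INR n) in H2 by (rewrite S_INR; field; lra).
     assert (sm B k / INR n <= RInt g 0 (INR k / INR n)) by (apply IHk; lia).
     replace ((sm B k + B k) / INR n) with (sm B k / INR n + B k / INR n) by (field; lra). lra. }
 specialize (H n (le_n n)). replace (INR n / INR n) with 1 in H by (field; lra). exact H.
Qed.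

Lemma Q_Sl (f : R -> R) t h : (f (t + h) - f t) / h = Sl f t (t + h).
Proof. unfold Sl. replace (t + h - t) with h by ring. reflexivity. Qed.

Lemma Sl_opp (f : R -> R) x y : Sl (fun s => - f s) x y = - Sl f x y.
Proof. unfold Sl, Rdiv. ring. Qed.

Section D1.
Variable C : R -> R -> R.
Hypothesis HC : is_copula C.

Lemma d1_01 v t : I01 v -> 0 <= t < 1 -> 0 <= d1 C t v <= 1.
Proof. intros Hv Ht. unfold d1. apply Derive_bounds with (e := 1 - t). lra.
 intros h Hh. rewrite (Q_Sl (fun s => C s v)). apply Sl_bounds; auto; lra. Qed.

Lemma d1_mono_v v1 v2 t : I01 v1 -> I01 v2 -> v1 <= v2 -> 0 <= t < 1 -> d1 C t v1 <= d1 C t v2.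
Proof. intros H1 H2 H12 Ht. unfold d1. apply Derive_le2 with 0 1 (1 - t). lra.
 - intros h Hh. rewrite (Q_Sl (fun s => C s v1)). apply Sl_bounds; auto; lra.
 - intros h Hh. rewrite (Q_Sl (fun s => C s v2)). apply Sl_bounds; auto; lra.
 - intros h Hh. unfold Rdiv. apply Rmult_le_compat_r. apply Rlt_le, Rinv_0_lt_compat; lra.
   apply cop_2inc; auto; unfold I01; lra. Qed.

Lemma d1_le_SI v a t : I01 v -> conc (fun s => C s v) -> 0 <= a < t -> t < 1 ->
  d1 C t v <= Sl (fun s => C s v) a t.
Proof. intros Hv Hc Ha Ht. unfold d1. apply Derive_bounds with (lo := 0) (e := 1 - t). lra.
 intros h Hh. rewrite (Q_Sl (fun s => C s v)). split. apply Sl_bounds; auto; lra.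
 apply chord_mono; auto; lra. Qed.

Lemma d1_ge_SI v t b : I01 v -> conc (fun s => C s v) -> 0 <= t < b -> b <= 1 ->
  Sl (fun s => C s v) t b <= d1 C t v.
Proof. intros Hv Hc Ht Hb. unfold d1. apply Derive_bounds with (hi := 1) (e := b - t). lra.
 intros h Hh. rewrite (Q_Sl (fun s => C s v)). split. apply chord_mono; auto; lra.
 apply Sl_bounds; auto; lra. Qed.

Lemma d1_le_SD v t b : I01 v -> conc (fun s => - C s v) -> 0 <= t < b -> b <= 1 ->
  d1 C t v <= Sl (fun s => C s v) t b.
Proof. intros Hv Hc Ht Hb. unfold d1. apply Derive_bounds with (lo := 0) (e := b - t). lra.
 intros h Hh. rewrite (Q_Sl (fun s => C s v)). split. apply Sl_bounds; auto; lra.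
 assert (Sl (fun s => - C s v) t b <= Sl (fun s => - C s v) t (t + h)) by (apply chord_mono; auto; lra).
 rewrite !Sl_opp in H. lra. Qed.

Lemma d1_ge_SD v a t : I01 v -> conc (fun s => - C s v) -> 0 <= a < t -> t < 1 ->
  Sl (fun s => C s v) a t <= d1 C t v.
Proof. intros Hv Hc Ha Ht. unfold d1. apply Derive_bounds with (hi := 1) (e := 1 - t). lra.
 intros h Hh. rewrite (Q_Sl (fun s => C s v)). split. 
 assert (Sl (fun s => - C s v) t (t + h) <= Sl (fun s => - C s v) a t) by (apply chord_mono; auto; lra).
 rewrite !Sl_opp in H. lra.
 apply Sl_bounds; auto; lra. Qed.

Lemma ex_J v : I01 v -> ex_RInt (fun u => C u v) 0 1.
Proof. intros Hv. apply mono_ex_RInt. lra. intros x y Hx Hxy Hy. apply cop_mono_u; auto; unfold I01; lra. Qed.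

Lemma ex_I_SI v : I01 v -> conc (fun s => C s v) -> ex_RInt (fun t => (d1 C t v)^2) 0 1.
Proof. intros Hv Hc.
 apply (ex_RInt_ext (fun t => if Rlt_dec t 1 then (d1 C t v)^2 else 0)).
 { intros x Hx. rewrite Rmin_left, Rmax_right in Hx by lra. destruct (Rlt_dec x 1); [reflexivity|lra]. }
 apply anti_ex_RInt. lra. intros x y Hx Hxy Hy.
 destruct (Rlt_dec y 1) as [Hy1|Hy1]; destruct (Rlt_dec x 1) as [Hx1|Hx1]; try lra.
 - pose proof (d1_01 v x Hv ltac:(lra)). pose proof (d1_01 v y Hv ltac:(lra)).
   destruct (Req_dec x y) as [E|E]. subst; lra.
   pose proof (d1_le_SI v x y Hv Hc ltac:(lra) Hy1). pose proof (d1_ge_SI v x y Hv Hc ltac:(lra) ltac:(lra)).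
   nra.
 - pose proof (d1_01 v x Hv ltac:(lra)). nra.
Qed.

Lemma ex_I_SD v : I01 v -> conc (fun s => - C s v) -> ex_RInt (fun t => (d1 C t v)^2) 0 1.
Proof. intros Hv Hc.
 apply (ex_RInt_ext (fun t => if Rlt_dec t 1 then (d1 C t v)^2 else 1)).
 { intros x Hx. rewrite Rmin_left, Rmax_right in Hx by lra. destruct (Rlt_dec x 1); [reflexivity|lra]. }
 apply mono_ex_RInt. lra. intros x y Hx Hxy Hy.
 destruct (Rlt_dec y 1) as [Hy1|Hy1]; destruct (Rlt_dec x 1) as [Hx1|Hx1]; try lra.
 - pose proof (d1_01 v x Hv ltac:(lra)). pose proof (d1_01 v y Hv ltac:(lra)).
   destruct (Req_dec x y) as [E|E]. subst; lra.
   pose proof (d1_le_SD v x y Hv Hc ltac:(lra) ltac:(lra)). pose proof (d1_ge_SD v x y Hv Hc ltac:(lra) Hy1).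
   nra.
 - pose proof (d1_01 v x Hv ltac:(lra)). nra.
Qed.

End D1.

Definition grid (g : R -> R) n k := g (INR k / INR n).
Definition slk (g : R -> R) n := slack (slopes (grid g n) n) n.

Lemma Sl_grid (f : R -> R) n k : (1 <= n)%nat ->
  Sl f (INR k / INR n) (INR (S k) / INR n) = slopes (grid f n) n k.
Proof. intros Hn. apply le_INR in Hn. simpl in Hn. unfold Sl, slopes, grid. rewrite S_INR. field. lra. Qed.

Lemma grid0 (f : R -> R) n : (1 <= n)%nat -> grid f n O = f 0.
Proof. intros Hn. apply le_INR in Hn. simpl in Hn. unfold grid. f_equal. simpl. field. lra. Qed.
Lemma gridn (f : R -> R) n : (1 <= n)%nat -> grid f n n = f 1.
Proof. intros Hn. apply le_INR in Hn. simpl in Hn. unfold grid. f_equal. field. lra. Qed.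

Lemma sm_sq_split (a : nat -> R) n : (1 <= n)%nat ->
  sm (fun i => match i with O => 1 | S j => a j ^ 2 end) n <= 1 + sm (fun i => a i ^ 2) n.
Proof. intros Hn. destruct n as [|m]; [lia|].
 pose proof (sm_shift (fun i => match i with O => 1 | S j => a j ^ 2 end) m) as E.
 change (sm (fun i => a i ^ 2) m = sm (fun i => match i with O => 1 | S j => a j ^ 2 end) (S m) - 1) in E.
 assert (sm (fun i => a i ^ 2) m <= sm (fun i => a i ^ 2) (S m)).
 { apply sm_mono; [intros; apply pow2_ge_0| lia]. }
 lra. Qed.

Section PerV.
Variable C : R -> R -> R.
Hypothesis HC : is_copula C.

Lemma perv_SI v n : I01 v -> conc (fun s => C s v) -> (1 <= n)%nat ->
  RInt (fun t => (d1 C t v)^2) 0 1 <= v^2 - v + 2 * RInt (fun u => C u v) 0 1 + 2 / INR n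
      - slk (fun s => C s v) n / INR n ^ 2.
Proof.
 intros Hv Hc Hn. pose proof (le_INR _ _ Hn) as HN. simpl in HN.
 set (f := fun s => C s v).
 set (F := grid f n). set (a := slopes F n).
 assert (HF0 : F O = 0). { unfold F. rewrite grid0 by auto. unfold f. destruct HC as (_ & _ & Hg & _). apply Hg. exact Hv. }
 assert (HFn : F n = v). { unfold F. rewrite gridn by auto. unfold f. destruct HC as (_ & _ & _ & _ & Hm & _). apply Hm; auto. }
 pose proof (disc_main F n Hn HF0) as Hd. fold a in Hd. rewrite HFn in Hd.
 assert (HI : RInt (fun t => (d1 C t v)^2) 0 1 <= sm (fun i => match i with O => 1 | S j => a j ^ 2 end) n / INR n).
 { apply cell_upper; auto. apply ex_I_SI; auto.
   intros i Hi t Ht.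
   pose proof (grid_le i n Hn ltac:(lia)). pose proof (grid_le (S i) n Hn Hi).
   pose proof (d1_01 C HC v t Hv ltac:(lra)).
   destruct i as [|j].
   - nra.
   - pose proof (grid_le j n Hn ltac:(lia)). pose proof (grid_lt j n Hn).
     assert (d1 C t v <= Sl f (INR j / INR n) t) by (apply d1_le_SI; auto; lra).
     assert (Sl f (INR j / INR n) t <= Sl f (INR j / INR n) (INR (S j) / INR n)) by (apply chord_mono; auto; lra).
     rewrite Sl_grid in H5 by auto. fold f F a in H5. nra. }
 assert (HJ : sm F n / INR n <= RInt (fun u => C u v) 0 1).
 { apply cell_lower; auto. apply ex_J; auto. intros i Hi t Ht.
   pose proof (grid_le i n Hn ltac:(lia)). pose proof (grid_le (S i) n Hn Hi).
   unfold F, grid, f. apply cop_mono_u; auto; unfold I01; lra. }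
 pose proof (sm_sq_split a n Hn) as Hs.
 fold (slk f n). replace (slack a n) with (slk f n) in Hd by reflexivity.
 set (X := sm (fun i => a i ^ 2) n) in *. set (S := sm F n) in *. set (K := slk f n) in *.
 assert (HJI : exists J I : R, J = RInt (fun u => C u v) 0 1 /\ I = RInt (fun t => (d1 C t v)^2) 0 1) by (do 2 eexists; split; reflexivity).
 destruct HJI as (J & I & EJ & EI). change (RInt f 0 1) with (RInt (fun u => C u v) 0 1). rewrite <- EJ in *. rewrite <- EI in *.
 set (Y := sm (fun i => match i with O => 1 | S j => a j ^ 2 end) n) in *.
 set (N := INR n) in *.
 assert (E : X / N = v^2 + 2 * (S / N) - v + v / N - K / N^2).
 { apply (Rmult_eq_reg_r (N^2)); [|nra]. field_simplify; [|lra|lra]. nra. }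
 assert (I <= (1 + X) / N).
 { apply (Rle_trans _ (Y / N)); auto. unfold Rdiv. apply Rmult_le_compat_r; [apply Rlt_le, Rinv_0_lt_compat; lra|lra]. }
 assert (v / N <= 1 / N). { unfold Rdiv. apply Rmult_le_compat_r; [apply Rlt_le, Rinv_0_lt_compat; lra|unfold I01 in Hv; lra]. }
 replace ((1 + X) / N) with (1 / N + X / N) in H by (field; lra).
 assert (E2 : 2 / N = 2 * (1 / N)) by (field; lra).
 rewrite E2. clearbody N. clearbody X. clearbody S. clearbody K. 
 set (x1 := X / N) in *. set (s1 := S / N) in *. set (k1 := K / N^2) in *. set (o := 1 / N) in *. set (vv := v / N) in *.
 lra.
Qed.

Lemma sm_sq_split2 (a : nat -> R) n : (1 <= n)%nat ->
  sm (fun i => if Nat.ltb (S i) n then a (S i) ^ 2 else 1) n <= 1 + sm (fun i => a i ^ 2) n.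
Proof. intros Hn. destruct n as [|m]; [lia|]. rewrite sm_S.
 replace (Nat.ltb (S m) (S m)) with false by (symmetry; apply Nat.ltb_ge; lia).
 rewrite (sm_ext _ (fun i => (fun j => a j ^ 2) (S i))).
 2:{ intros i Hi. replace (Nat.ltb (S i) (S m)) with true by (symmetry; apply Nat.ltb_lt; lia). reflexivity. }
 rewrite (sm_shift (fun j => a j ^ 2)). pose proof (pow2_ge_0 (a O)). lra. Qed.

Lemma perv_SD v n : I01 v -> conc (fun s => - C s v) -> (1 <= n)%nat ->
  RInt (fun t => (d1 C t v)^2) 0 1 <= v^2 + v - 2 * RInt (fun u => C u v) 0 1 + 2 / INR n
      - slk (fun u => v - C (1 - u) v) n / INR n ^ 2.
Proof.
 intros Hv Hc Hn. pose proof (le_INR _ _ Hn) as HN. simpl in HN.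
 set (f := fun s => C s v).
 set (F := grid f n). set (a := slopes F n).
 set (G := grid (fun u => v - C (1 - u) v) n). set (b := slopes G n).
 assert (HF0 : F O = 0). { unfold F. rewrite grid0 by auto. unfold f. destruct HC as (_ & _ & Hg & _). apply Hg. exact Hv. }
 assert (HFn : F n = v). { unfold F. rewrite gridn by auto. unfold f. destruct HC as (_ & _ & _ & _ & Hm & _). apply Hm; unfold I01 in *; lra. }
 assert (HG : forall k, (k <= n)%nat -> G k = v - F (n - k)%nat).
 { intros k Hk. unfold G, F, grid, f. rewrite minus_INR by auto. do 2 f_equal. field. lra. }
 assert (HG0 : G O = 0). { rewrite HG by lia. rewrite Nat.sub_0_r, HFn. ring. }
 assert (HGn : G n = v). { rewrite HG by lia. rewrite Nat.sub_diag, HF0. ring. }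
 pose proof (disc_main G n Hn HG0) as Hd. fold b in Hd. rewrite HGn in Hd.
 assert (Hb2 : sm (fun i => b i ^ 2) n = sm (fun i => a i ^ 2) n).
 { rewrite <- (sm_rev (fun i => a i ^ 2)). apply sm_ext. intros i Hi.
   unfold b, a, slopes. rewrite !HG by lia. replace (n - S i)%nat with (n - 1 - i)%nat by lia.
   replace (n - i)%nat with (S (n - 1 - i)) by lia. ring. }
 assert (HsG : sm G n = INR n * v - (sm F n + v)).
 { rewrite (sm_ext G (fun k => v + (-1) * (fun j => F (S j)) (n - 1 - k)%nat)).
   2:{ intros k Hk. rewrite HG by lia. replace (n - k)%nat with (S (n - 1 - k)) by lia. ring. }
   rewrite sm_plus, sm_scal, sm_const. rewrite (sm_rev (fun j => F (S j))). rewrite sm_shift, sm_S, HF0, HFn. ring. }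
 rewrite Hb2, HsG in Hd.
 assert (HI : RInt (fun t => (d1 C t v)^2) 0 1 <= sm (fun i => if Nat.ltb (S i) n then a (S i) ^ 2 else 1) n / INR n).
 { apply cell_upper; auto. apply ex_I_SD; auto.
   intros i Hi t Ht.
   pose proof (grid_le i n Hn ltac:(lia)). pose proof (grid_le (S i) n Hn Hi).
   pose proof (d1_01 C HC v t Hv ltac:(lra)).
   destruct (Nat.ltb (S i) n) eqn:Eq.
   - apply Nat.ltb_lt in Eq.
     pose proof (grid_le (S (S i)) n Hn Eq). pose proof (grid_lt (S i) n Hn).
     assert (Z1 : d1 C t v <= Sl f t (INR (S (S i)) / INR n)) by (apply d1_le_SD; auto; lra).
     assert (Z2 : Sl (fun s => - C s v) (INR (S i) / INR n) (INR (S (S i)) / INR n) <= Sl (fun s => - C s v) t (INR (S (S i)) / INR n)) by (apply chord_mono; auto; lra).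
     rewrite !Sl_opp in Z2. fold f in Z2. rewrite Sl_grid in Z2 by auto. fold F a in Z2. nra.
   - nra. }
 assert (HJ : RInt (fun u => C u v) 0 1 <= sm (fun k => F (S k)) n / INR n).
 { apply cell_upper; auto. apply ex_J; auto. intros i Hi t Ht.
   pose proof (grid_le i n Hn ltac:(lia)). pose proof (grid_le (S i) n Hn Hi).
   unfold F, grid, f. apply cop_mono_u; auto; unfold I01; lra. }
 rewrite sm_shift, sm_S, HF0, HFn in HJ.
 pose proof (sm_sq_split2 a n Hn) as Hs.
 fold (slk (fun u => v - C (1 - u) v) n). replace (slack b n) with (slk (fun u => v - C (1 - u) v) n) in Hd by reflexivity.
 set (X := sm (fun i => a i ^ 2) n) in *. set (Sf := sm F n) in *. set (K := slk (fun u => v - C (1 - u) v) n) in *.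
 assert (HJI : exists J I : R, J = RInt (fun u => C u v) 0 1 /\ I = RInt (fun t => (d1 C t v)^2) 0 1) by (do 2 eexists; split; reflexivity).
 destruct HJI as (J & I & EJ & EI). change (RInt f 0 1) with (RInt (fun u => C u v) 0 1). rewrite <- EJ in *. rewrite <- EI in *.
 set (Y := sm (fun i => if Nat.ltb (S i) n then a (S i) ^ 2 else 1) n) in *.
 set (N := INR n) in *.
 assert (E : X / N = v^2 + v - 2 * (Sf / N) - v / N - K / N^2).
 { apply (Rmult_eq_reg_r (N^2)); [|nra]. field_simplify; [|lra|lra]. nra. }
 assert (I <= (1 + X) / N).
 { apply (Rle_trans _ (Y / N)); auto. unfold Rdiv. apply Rmult_le_compat_r; [apply Rlt_le, Rinv_0_lt_compat; lra|lra]. }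
 assert (v / N <= 1 / N). { unfold Rdiv. apply Rmult_le_compat_r; [apply Rlt_le, Rinv_0_lt_compat; lra|unfold I01 in Hv; lra]. }
 replace ((1 + X) / N) with (1 / N + X / N) in H by (field; lra).
 replace ((Sf + v - 0) / N) with (Sf / N + v / N) in HJ by (field; lra).
 assert (E2 : 2 / N = 2 * (1 / N)) by (field; lra).
 rewrite E2. clearbody N. clearbody X. clearbody Sf. clearbody K.
 set (x1 := X / N) in *. set (s1 := Sf / N) in *. set (k1 := K / N^2) in *. set (o := 1 / N) in *. set (vv := v / N) in *.
 lra.
Qed.
End PerV.

Lemma RInt_lin (f g : R -> R) a b (al be : R) : ex_RInt f a b -> ex_RInt g a b ->
  ex_RInt (fun x => al * f x + be * g x) a b /\
  RInt (fun x => al * f x + be * g x) a b = al * RInt f a b + be * RInt g a b.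
Proof. intros Hf Hg.
 assert (H1 := ex_RInt_scal f a b al Hf). assert (H2 := ex_RInt_scal g a b be Hg).
 split. apply (ex_RInt_plus _ _ a b H1 H2).
 assert (E1 : RInt (fun x => al * f x) a b = al * RInt f a b) by exact (RInt_scal f a b al Hf).
 assert (E2 : RInt (fun x => be * g x) a b = be * RInt g a b) by exact (RInt_scal g a b be Hg).
 assert (E : RInt (fun x => al * f x + be * g x) a b = RInt (fun x => al * f x) a b + RInt (fun x => be * g x) a b)
   by exact (RInt_plus _ _ a b H1 H2).
 rewrite E, E1, E2. reflexivity. Qed.

Lemma RInt_poly_gen (p P : R -> R) a b : (forall x, is_derive P x (p x)) ->
  (forall x, ex_derive p x) -> ex_RInt p a b /\ RInt p a b = P b - P a.
Proof. intros HP Hp.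
 assert (H : is_RInt p a b (minus (P b) (P a))).
 { apply (is_RInt_derive (V := R_CompleteNormedModule) P p). intros; apply HP. intros x _; exact (ex_derive_continuous p x (Hp x)). }
 split. eexists; exact H. exact (is_RInt_unique (V := R_CompleteNormedModule) p a b _ H). Qed.

Lemma RInt_p1 : ex_RInt (fun v => v^2 - v) 0 1 /\ RInt (fun v => v^2 - v) 0 1 = -1/6.
Proof. destruct (RInt_poly_gen (fun v => v^2 - v) (fun v => v^3/3 - v^2/2) 0 1) as [H1 H2].
 intros x. auto_derive; auto. match goal with |- ?a = ?b => change (@eq R a b) end. field. intros x. auto_derive; auto.
 split; auto. rewrite H2. match goal with |- ?a = ?b => change (@eq R a b) end. field. Qed.

Lemma RInt_p2 : ex_RInt (fun v => v^2 + v) 0 1 /\ RInt (fun v => v^2 + v) 0 1 = 5/6.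
Proof. destruct (RInt_poly_gen (fun v => v^2 + v) (fun v => v^3/3 + v^2/2) 0 1) as [H1 H2].
 intros x. auto_derive; auto. match goal with |- ?a = ?b => change (@eq R a b) end. field. intros x. auto_derive; auto.
 split; auto. rewrite H2. match goal with |- ?a = ?b => change (@eq R a b) end. field. Qed.

Definition Ifun (C : R -> R -> R) v := RInt (fun t => (d1 C t v)^2) 0 1.
Definition Jfun (C : R -> R -> R) v := RInt (fun u => C u v) 0 1.

Lemma xi_eq C : xi C = 6 * RInt (Ifun C) 0 1 - 2.
Proof. reflexivity. Qed.
Lemma rho_eq C : rho C = 12 * RInt (Jfun C) 0 1 - 3.
Proof. reflexivity. Qed.

Definition monoC (C : R -> R -> R) := is_SI C \/ is_SD C.

Lemma conc_SI C v : is_SI C -> I01 v -> conc (fun s => C s v).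
Proof. intros H Hv x y l Hx Hy Hl. apply H; auto. Qed.
Lemma conc_SD C v : is_SD C -> I01 v -> conc (fun s => - C s v).
Proof. intros H Hv x y l Hx Hy Hl. pose proof (H v Hv x y l Hx Hy Hl). lra. Qed.
Lemma conc_refl C v : is_SD C -> I01 v -> conc (fun u => v - C (1 - u) v).
Proof. intros H Hv x y l Hx Hy Hl. unfold I01 in *.
 pose proof (H v Hv (1 - x) (1 - y) l ltac:(unfold I01; lra) ltac:(unfold I01; lra) Hl).
 replace (1 - (l * x + (1 - l) * y)) with (l * (1 - x) + (1 - l) * (1 - y)) by ring. nra. Qed.

Section Main.
Variable C : R -> R -> R.
Hypothesis HC : is_copula C.
Hypothesis Hmon : monoC C.

Lemma ex_I v : I01 v -> ex_RInt (fun t => (d1 C t v)^2) 0 1.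
Proof. intros Hv. destruct Hmon as [H|H].
 apply ex_I_SI; auto. apply conc_SI; auto. apply ex_I_SD; auto. apply conc_SD; auto. Qed.

Lemma Ifun_mono v1 v2 : I01 v1 -> I01 v2 -> v1 <= v2 -> Ifun C v1 <= Ifun C v2.
Proof. intros H1 H2 H12. unfold Ifun. apply RInt_le. lra. apply ex_I; auto. apply ex_I; auto.
 intros t Ht. pose proof (d1_01 C HC v1 t H1 ltac:(lra)). pose proof (d1_mono_v C HC v1 v2 t H1 H2 H12 ltac:(lra)). nra. Qed.

Lemma Jfun_mono v1 v2 : I01 v1 -> I01 v2 -> v1 <= v2 -> Jfun C v1 <= Jfun C v2.
Proof. intros H1 H2 H12. unfold Jfun. apply RInt_le. lra. apply ex_J; auto. apply ex_J; auto.
 intros t Ht. apply cop_mono_v; auto. unfold I01; lra. Qed.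

Lemma Jfun_lip v1 v2 : I01 v1 -> I01 v2 -> v1 <= v2 -> Jfun C v2 - Jfun C v1 <= v2 - v1.
Proof. intros H1 H2 H12. unfold Jfun.
 assert (RInt (fun u => C u v2) 0 1 <= RInt (fun u => C u v1 + (v2 - v1)) 0 1).
 { apply RInt_le. lra. apply ex_J; auto. apply (ex_RInt_plus (fun u => C u v1) (fun _ => v2 - v1)). apply ex_J; auto. apply ex_RInt_const.
   intros t Ht. pose proof (cop_lip_v C HC t v1 v2 ltac:(unfold I01; lra) H1 H2 H12). lra. }
 rewrite (RInt_plus (fun u => C u v1) (fun _ => v2 - v1)) in H. 2: apply ex_J; auto. 2: apply ex_RInt_const.
 rewrite RInt_const_R in H. change (plus ?x ?y) with (x + y) in H. lra. Qed.

Lemma ex_Ifun : ex_RInt (Ifun C) 0 1.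
Proof. apply mono_ex_RInt. lra. intros; apply Ifun_mono; unfold I01; lra. Qed.
Lemma ex_Jfun : ex_RInt (Jfun C) 0 1.
Proof. apply mono_ex_RInt. lra. intros; apply Jfun_mono; unfold I01; lra. Qed.

Lemma le_lim_n x y : (forall n, (1 <= n)%nat -> x <= y + 2 / INR n) -> x <= y.
Proof. intros H. destruct (Rle_dec x y) as [|Hn]; auto. exfalso.
 destruct (nat_large (2 / (x - y))) as [n Hn'].
 assert (0 < 2 / (x - y)) by (apply Rdiv_lt_0_compat; lra).
 assert (1 <= n)%nat. { destruct n. simpl in Hn'. lra. lia. }
 pose proof (H n H1). assert (0 < INR n) by lra.
 assert (2 / INR n < x - y).
 { apply (Rmult_lt_reg_r (INR n)); auto. replace (2 / INR n * INR n) with 2 by (field; lra).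
   apply (Rmult_lt_reg_r (/ (x - y))). apply Rinv_0_lt_compat; lra.
   replace ((x - y) * INR n * / (x - y)) with (INR n) by (field; lra). unfold Rdiv in Hn'. lra. }
 lra. Qed.

Lemma slk_ge0 (g : R -> R) n : conc g -> (forall x y, 0 <= x -> x < y -> y <= 1 -> 0 <= Sl g x y <= 1) ->
  (1 <= n)%nat -> 0 <= slk g n.
Proof. intros Hc Hb Hn. unfold slk. apply slack_ge0. intros i j Hij.
 rewrite <- !Sl_grid by auto.
 pose proof (grid_le i n Hn ltac:(lia)). pose proof (grid_le (S j) n Hn ltac:(lia)).
 pose proof (grid_le j n Hn ltac:(lia)). pose proof (grid_le (S i) n Hn ltac:(lia)).
 pose proof (grid_lt i n Hn). pose proof (grid_lt j n Hn).
 assert (INR i / INR n <= INR j / INR n).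
 { apply Rmult_le_compat_r. apply Rlt_le, Rinv_0_lt_compat. apply lt_0_INR; lia. apply le_INR; lia. }
 assert (INR (S i) / INR n <= INR (S j) / INR n).
 { apply Rmult_le_compat_r. apply Rlt_le, Rinv_0_lt_compat. apply lt_0_INR; lia. apply le_INR; lia. }
 pose proof (chord_mono g Hc (INR i / INR n) (INR (S i) / INR n) (INR j / INR n) (INR (S j) / INR n)
   ltac:(lra) ltac:(lra) ltac:(lra) ltac:(lra) ltac:(lra) ltac:(lra)).
 pose proof (Hb (INR i / INR n) (INR (S i) / INR n) ltac:(lra) ltac:(lra) ltac:(lra)).
 pose proof (Hb (INR j / INR n) (INR (S j) / INR n) ltac:(lra) ltac:(lra) ltac:(lra)).
 lra. Qed.

Lemma Sl_refl v x y : I01 v -> 0 <= x -> x < y -> y <= 1 -> 0 <= Sl (fun u => v - C (1 - u) v) x y <= 1.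
Proof. intros Hv H0 H1 H2.
 replace (Sl (fun u => v - C (1 - u) v) x y) with (Sl (fun s => C s v) (1 - y) (1 - x)) by (unfold Sl; field; lra).
 apply Sl_bounds; auto; lra. Qed.

Definition DSI v := v^2 - v + 2 * Jfun C v - Ifun C v.
Definition DSD v := v^2 + v - 2 * Jfun C v - Ifun C v.


Lemma ptw_SI v : is_SI C -> I01 v -> Ifun C v <= v^2 - v + 2 * Jfun C v.
Proof. intros HS Hv. apply le_lim_n. intros n Hn.
 pose proof (perv_SI C HC v n Hv (conc_SI C v HS Hv) Hn) as H.
 assert (0 <= slk (fun s => C s v) n).
 { apply slk_ge0; auto. apply conc_SI; auto. intros; apply Sl_bounds; auto. }
 assert (0 <= slk (fun s => C s v) n / INR n ^ 2).
 { apply Rmult_le_pos; auto. apply Rlt_le, Rinv_0_lt_compat. apply pow_lt. apply lt_0_INR; lia. }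
 unfold Ifun, Jfun. lra. Qed.

Lemma ptw_SD v : is_SD C -> I01 v -> Ifun C v <= v^2 + v - 2 * Jfun C v.
Proof. intros HS Hv. apply le_lim_n. intros n Hn.
 pose proof (perv_SD C HC v n Hv (conc_SD C v HS Hv) Hn) as H.
 assert (0 <= slk (fun u => v - C (1 - u) v) n).
 { apply slk_ge0; auto. apply conc_refl; auto. intros; apply Sl_refl; auto. }
 assert (0 <= slk (fun u => v - C (1 - u) v) n / INR n ^ 2).
 { apply Rmult_le_pos; auto. apply Rlt_le, Rinv_0_lt_compat. apply pow_lt. apply lt_0_INR; lia. }
 unfold Ifun, Jfun. lra. Qed.

Lemma RInt_JI (al be : R) : ex_RInt (fun v => al * Jfun C v + be * Ifun C v) 0 1 /\ RInt (fun v => al * Jfun C v + be * Ifun C v) 0 1 = al * RInt (Jfun C) 0 1 + be * RInt (Ifun C) 0 1.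
Proof. apply RInt_lin. apply ex_Jfun. apply ex_Ifun. Qed.

Lemma RInt_DSI : ex_RInt DSI 0 1 /\ RInt DSI 0 1 = (rho C - xi C) / 6.
Proof. destruct RInt_p1 as [P1 P2]. destruct (RInt_JI 2 (-1)) as [Q1 Q2].
 destruct (RInt_lin (fun v => v^2 - v) (fun v => 2 * Jfun C v + -1 * Ifun C v) 0 1 1 1 P1 Q1) as [R1 R2].
 assert (E : forall v, 1 * (v^2 - v) + 1 * (2 * Jfun C v + -1 * Ifun C v) = DSI v) by (intros; unfold DSI; ring).
 split. apply (ex_RInt_ext _ _ 0 1 (fun v _ => E v) R1).
 rewrite <- (RInt_ext _ _ 0 1 (fun v _ => E v)). rewrite R2, P2, Q2, rho_eq, xi_eq. match goal with |- ?a = ?b => change (@eq R a b) end. field. Qed.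

Lemma RInt_DSD : ex_RInt DSD 0 1 /\ RInt DSD 0 1 = (- rho C - xi C) / 6.
Proof. destruct RInt_p2 as [P1 P2]. destruct (RInt_JI (-2) (-1)) as [Q1 Q2].
 destruct (RInt_lin (fun v => v^2 + v) (fun v => -2 * Jfun C v + -1 * Ifun C v) 0 1 1 1 P1 Q1) as [R1 R2].
 assert (E : forall v, 1 * (v^2 + v) + 1 * (-2 * Jfun C v + -1 * Ifun C v) = DSD v) by (intros; unfold DSD; ring).
 split. apply (ex_RInt_ext _ _ 0 1 (fun v _ => E v) R1).
 rewrite <- (RInt_ext _ _ 0 1 (fun v _ => E v)). rewrite R2, P2, Q2, rho_eq, xi_eq. match goal with |- ?a = ?b => change (@eq R a b) end. field. Qed.

Lemma ineq_SI : is_SI C -> xi C <= rho C.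
Proof. intros HS. destruct RInt_DSI as [H1 H2].
 assert (0 <= RInt DSI 0 1).
 { apply RInt_ge_0. lra. auto. intros v Hv. pose proof (ptw_SI v HS ltac:(unfold I01; lra)). unfold DSI. lra. }
 lra. Qed.

Lemma ineq_SD : is_SD C -> xi C <= - rho C.
Proof. intros HS. destruct RInt_DSD as [H1 H2].
 assert (0 <= RInt DSD 0 1).
 { apply RInt_ge_0. lra. auto. intros v Hv. pose proof (ptw_SD v HS ltac:(unfold I01; lra)). unfold DSD. lra. }
 lra. Qed.

Lemma ineq_main : xi C <= Rabs (rho C).
Proof. destruct Hmon as [H|H].
 pose proof (ineq_SI H). pose proof (Rle_abs (rho C)). lra.
 pose proof (ineq_SD H). pose proof (Rabs_maj2 (rho C)). lra. Qed.

End Main.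

Lemma zero_pt (D : R -> R) : ex_RInt D 0 1 -> RInt D 0 1 = 0 ->
  (forall v, 0 < v < 1 -> 0 <= D v) ->
  (forall v w, 0 < v -> v <= w -> w < 1 -> D w - 5 * (w - v) <= D v) ->
  forall w, 0 < w < 1 -> D w = 0.
Proof.
 intros Hex H0 Hpos Hl w Hw.
 destruct (Rle_dec (D w) 0) as [Hd|Hd]. pose proof (Hpos w Hw); lra.
 exfalso. set (e := Rmin (w / 2) (D w / 10)).
 assert (He : 0 < e) by (unfold e; apply Rmin_glb_lt; lra).
 assert (He1 : e <= w / 2) by (unfold e; apply Rmin_l).
 assert (He2 : e <= D w / 10) by (unfold e; apply Rmin_r).
 assert (E1 : ex_RInt D 0 (w - e)) by (apply ex_RInt_sub; auto; lra).
 assert (E2 : ex_RInt D (w - e) w) by (apply ex_RInt_sub; auto; lra).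
 assert (E3 : ex_RInt D w 1) by (apply ex_RInt_sub; auto; lra).
 rewrite (RInt_Chasles_R D 0 w 1) in H0; [|apply ex_RInt_sub; auto; lra|auto].
 rewrite (RInt_Chasles_R D 0 (w - e) w) in H0; auto.
 assert (Z1 : 0 <= RInt D 0 (w - e)) by (apply RInt_ge_0; auto; [lra| intros; apply Hpos; lra]).
 assert (Z2 : 0 <= RInt D w 1) by (apply RInt_ge_0; auto; [lra| intros; apply Hpos; lra]).
 assert (H3 : RInt (fun _ => D w / 2) (w - e) w <= RInt D (w - e) w).
 { apply RInt_le; auto. lra. apply ex_RInt_const. intros x Hx. pose proof (Hl x w ltac:(lra) ltac:(lra) ltac:(lra)). lra. }
 rewrite RInt_const_R in H3. assert (0 < (w - (w - e)) * (D w / 2)) by (apply Rmult_lt_0_compat; lra).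
 lra.
Qed.

Lemma nat_floor x : 0 <= x -> exists k : nat, INR k <= x < INR k + 1.
Proof. intros Hx. destruct (archimed x) as [H1 H2].
 assert (Hu : (1 <= up x)%Z). { assert (0 < up x)%Z by (apply lt_IZR; lra). lia. }
 assert (0 <= up x - 1)%Z by lia.
 exists (Z.to_nat (up x - 1)). rewrite INR_IZR_INZ, Z2Nat.id by auto. rewrite minus_IZR. simpl. lra. Qed.

Lemma nat_up x : 0 <= x -> exists k : nat, x < INR k <= x + 1.
Proof. intros Hx. destruct (archimed x) as [H1 H2].
 assert (0 <= up x)%Z by (apply le_IZR; lra).
 exists (Z.to_nat (up x)). rewrite INR_IZR_INZ, Z2Nat.id by auto. lra. Qed.

Lemma block n p q : (1 <= n)%nat -> 0 <= p -> q <= 1 -> 2 <= INR n * (q - p) ->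
  exists i0 N1 : nat, p <= INR i0 / INR n /\ INR (i0 + N1) / INR n <= q /\ INR n * (q - p) - 2 <= INR N1.
Proof.
 intros Hn Hp Hq H2. pose proof (le_INR _ _ Hn) as HN. simpl in HN.
 destruct (nat_up (INR n * p)) as [i0 [Hi1 Hi2]]. nra.
 destruct (nat_floor (INR n * q)) as [k1 [Hk1 Hk2]]. nra.
 assert (Hik : (i0 <= k1)%nat). { apply INR_le. nra. }
 exists i0, (k1 - i0)%nat. replace (i0 + (k1 - i0))%nat with k1 by lia.
 rewrite minus_INR by auto. split; [|split].
 - apply (Rmult_le_reg_r (INR n)); [lra|]. field_simplify; nra.
 - apply (Rmult_le_reg_r (INR n)); [lra|]. field_simplify; nra.
 - nra.
Qed.

Definition P8 (g : R -> R) := forall a b c c' d' d e g',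
  0 <= a -> a < b -> b < c -> c < c' -> c' <= d' -> d' < d -> d < e -> e < g' -> g' <= 1 ->
  Sl g c c' - Sl g d' d <= 0 \/ 1 <= Sl g a b - Sl g e g'.

Lemma sm_lb (g : nat -> R) N c : (forall i, (i < N)%nat -> c <= g i) -> INR N * c <= sm g N.
Proof. intros H. rewrite <- sm_const. apply sm_le. auto. Qed.

Lemma grid_mono i j n : (1 <= n)%nat -> (i <= j)%nat -> INR i / INR n <= INR j / INR n.
Proof. intros Hn Hij. apply Rmult_le_compat_r. apply Rlt_le, Rinv_0_lt_compat, lt_0_INR; lia. apply le_INR; auto. Qed.

Lemma slack_lb (g : R -> R) n a b c c' d' d e g' :
  conc g -> (forall x y, 0 <= x -> x < y -> y <= 1 -> 0 <= Sl g x y <= 1) -> (1 <= n)%nat ->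
  0 <= a -> a < b -> b < c -> c < c' -> c' <= d' -> d' < d -> d < e -> e < g' -> g' <= 1 ->
  2 <= INR n * (c - b) -> 2 <= INR n * (e - d) ->
  (INR n * (c - b) - 2) * (INR n * (e - d) - 2) * ((Sl g c c' - Sl g d' d) * (1 - (Sl g a b - Sl g e g')))
   <= slk g n \/ Sl g c c' - Sl g d' d <= 0 \/ 1 <= Sl g a b - Sl g e g'.
Proof.
 intros Hc HB Hn Ha Hab Hbc Hcc Hcd Hdd Hde Heg Hg Hn1 Hn2.
 destruct (Rle_dec (Sl g c c' - Sl g d' d) 0) as [X|X]. right; left; auto.
 destruct (Rle_dec 1 (Sl g a b - Sl g e g')) as [Y|Y]. right; right; auto.
 left. set (d1' := Sl g c c' - Sl g d' d). set (d2 := 1 - (Sl g a b - Sl g e g')).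
 assert (P1 : 0 < d1') by (unfold d1'; lra). assert (P2 : 0 < d2) by (unfold d2; lra).
 pose proof (le_INR _ _ Hn) as HN. simpl in HN.
 destruct (block n b c Hn ltac:(lra) ltac:(lra) Hn1) as (i0 & N1 & Hi0 & Hi1 & HN1).
 destruct (block n d e Hn ltac:(lra) ltac:(lra) Hn2) as (j0 & N2 & Hj0 & Hj1 & HN2).
 assert (Hij : (i0 + N1 <= j0)%nat).
 { apply INR_le. apply (Rmult_le_reg_r (/ INR n)). apply Rinv_0_lt_compat; lra.
   change (INR (i0 + N1) / INR n <= INR j0 / INR n). lra. }
 assert (Hjn : (j0 + N2 <= n)%nat).
 { apply INR_le. apply (Rmult_le_reg_r (/ INR n)). apply Rinv_0_lt_compat; lra.
   change (INR (j0 + N2) / INR n <= INR n / INR n). replace (INR n / INR n) with 1 by (field; lra). lra. }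
 set (s := slopes (grid g n) n).
 assert (Hs : forall i, (i < n)%nat -> s i = Sl g (INR i / INR n) (INR (S i) / INR n)).
 { intros; unfold s; rewrite Sl_grid; auto. }
 assert (HI : forall l, (l < N1)%nat -> Sl g c c' <= s (i0 + l)%nat <= Sl g a b).
 { intros l Hl. rewrite Hs by lia.
   pose proof (grid_mono i0 (i0 + l) n Hn ltac:(lia)). pose proof (grid_mono (S (i0 + l)) (i0 + N1) n Hn ltac:(lia)).
   pose proof (grid_lt (i0 + l) n Hn).
   split; apply chord_mono; auto; lra. }
 assert (HJ : forall l, (l < N2)%nat -> Sl g e g' <= s (j0 + l)%nat <= Sl g d' d).
 { intros l Hl. rewrite Hs by lia.
   pose proof (grid_mono j0 (j0 + l) n Hn ltac:(lia)). pose proof (grid_mono (S (j0 + l)) (j0 + N2) n Hn ltac:(lia)).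
   pose proof (grid_lt (j0 + l) n Hn).
   split; apply chord_mono; auto; lra. }
 assert (Hphi : forall x, d1' <= x -> x <= 1 - d2 -> d1' * d2 <= phi x).
 { intros x H1 H2. unfold phi. nra. }
 assert (Hpos : forall i j, (i < j)%nat -> (j < n)%nat -> 0 <= phi (s i - s j)).
 { intros i j Hij' Hjn'. rewrite !Hs by lia.
   pose proof (grid_mono i j n Hn ltac:(lia)). pose proof (grid_mono (S i) (S j) n Hn ltac:(lia)).
   pose proof (grid_lt i n Hn). pose proof (grid_lt j n Hn).
   pose proof (grid_le (S j) n Hn ltac:(lia)). pose proof (grid_le i n Hn ltac:(lia)).
   pose proof (chord_mono g Hc (INR i / INR n) (INR (S i) / INR n) (INR j / INR n) (INR (S j) / INR n)
     ltac:(lra) ltac:(lra) ltac:(lra) ltac:(lra) ltac:(lra) ltac:(lra)).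
   pose proof (HB (INR i / INR n) (INR (S i) / INR n) ltac:(lra) ltac:(lra) ltac:(lra)).
   pose proof (HB (INR j / INR n) (INR (S j) / INR n) ltac:(lra) ltac:(lra) ltac:(lra)).
   unfold phi. nra. }
 unfold slk, slack. fold s.
 assert (Hrow : forall m, (m < N2)%nat -> INR N1 * (d1' * d2) <= sm (fun i => phi (s i - s (j0 + m)%nat)) (j0 + m)).
 { intros m Hm. apply (Rle_trans _ (sm (fun l => phi (s (i0 + l)%nat - s (j0 + m)%nat)) N1)).
   - apply sm_lb. intros l Hl. apply Hphi; destruct (HI l Hl); destruct (HJ m Hm); unfold d1', d2 in *; lra.
   - apply (sm_sub_ge (fun i => phi (s i - s (j0 + m)%nat))). intros i Hi. apply Hpos; lia. lia. }
 apply (Rle_trans _ (INR N2 * (INR N1 * (d1' * d2)))).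
 - assert (0 <= INR n * (c - b) - 2) by lra. assert (0 <= INR n * (e - d) - 2) by lra.
   assert (0 <= d1' * d2) by nra.
   assert (Q1 : (INR n * (c - b) - 2) * (INR n * (e - d) - 2) <= INR N1 * INR N2) by (apply Rmult_le_compat; lra).
   assert (Q2 : (INR n * (c - b) - 2) * (INR n * (e - d) - 2) * (d1' * d2) <= INR N1 * INR N2 * (d1' * d2))
     by (apply Rmult_le_compat_r; auto).
   replace (INR N2 * (INR N1 * (d1' * d2))) with (INR N1 * INR N2 * (d1' * d2)) by ring. lra.
 - apply (Rle_trans _ (sm (fun m => sm (fun i => phi (s i - s (j0 + m)%nat)) (j0 + m)) N2)).
   + apply sm_lb. auto.
   + apply (sm_sub_ge (fun j => sm (fun i => phi (s i - s j)) j)). intros j Hj. apply sm_ge0. intros i Hi. apply Hpos; lia. lia.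
Qed.


Lemma mul_gt (n x y : R) : 0 < x -> y / x < n -> y < n * x.
Proof. intros Hx H. apply (Rmult_lt_compat_r x) in H; auto. replace (y / x * x) with y in H by (field; lra). lra. Qed.

Lemma P8_of_small (g : R -> R) : conc g -> (forall x y, 0 <= x -> x < y -> y <= 1 -> 0 <= Sl g x y <= 1) ->
  (forall n, (1 <= n)%nat -> slk g n / INR n ^ 2 <= 2 / INR n) -> P8 g.
Proof.
 intros Hc HB Hs a b c c' d' d e g' Ha Hab Hbc Hcc Hcd Hdd Hde Heg Hg.
 destruct (Rle_dec (Sl g c c' - Sl g d' d) 0) as [X|X]. left; auto.
 destruct (Rle_dec 1 (Sl g a b - Sl g e g')) as [Y|Y]. right; auto.
 exfalso. set (d1' := Sl g c c' - Sl g d' d) in *. set (d2 := 1 - (Sl g a b - Sl g e g')).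
 assert (P1 : 0 < d1') by lra. assert (P2 : 0 < d2) by (unfold d2; lra).
 set (K := (c - b) * (e - d) * (d1' * d2) / 4).
 assert (HK : 0 < K). { unfold K. apply Rmult_lt_0_compat; [|lra]. apply Rmult_lt_0_compat. nra. nra. }
 destruct (nat_large (4 / (c - b) + 4 / (e - d) + 2 / K + 1)) as [n Hn].
 assert (Q1 : 0 < 4 / (c - b)) by (apply Rdiv_lt_0_compat; lra).
 assert (Q2 : 0 < 4 / (e - d)) by (apply Rdiv_lt_0_compat; lra).
 assert (Q3 : 0 < 2 / K) by (apply Rdiv_lt_0_compat; lra).
 assert (Hn1 : (1 <= n)%nat). { destruct n. simpl in Hn. lra. lia. }
 assert (HN : 0 < INR n) by lra.
 assert (A1 : 4 < INR n * (c - b)) by (apply mul_gt; lra).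
 assert (A2 : 4 < INR n * (e - d)) by (apply mul_gt; lra).
 assert (A3 : 2 < INR n * K) by (apply mul_gt; lra).
 destruct (slack_lb g n a b c c' d' d e g' Hc HB Hn1 Ha Hab Hbc Hcc Hcd Hdd Hde Heg Hg ltac:(lra) ltac:(lra))
   as [L|[L|L]]; [|fold d1' in L; lra|unfold d2 in *; lra].
 fold d1' d2 in L.
 assert (L2 : INR n ^ 2 * K <= slk g n).
 { apply (Rle_trans _ ((INR n * (c - b) - 2) * (INR n * (e - d) - 2) * (d1' * d2))); auto.
   assert (INR n * (c - b) / 2 <= INR n * (c - b) - 2) by lra.
   assert (INR n * (e - d) / 2 <= INR n * (e - d) - 2) by lra.
   assert (0 <= d1' * d2) by nra.
   replace (INR n ^ 2 * K) with ((INR n * (c - b) / 2) * (INR n * (e - d) / 2) * (d1' * d2)) by (unfold K; field).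
   apply Rmult_le_compat_r; auto. apply Rmult_le_compat; lra. }
 pose proof (Hs n Hn1) as H.
 assert (K <= slk g n / INR n ^ 2).
 { apply (Rmult_le_reg_r (INR n ^ 2)). apply pow_lt; lra. replace (slk g n / INR n ^ 2 * INR n ^ 2) with (slk g n) by (field; lra). lra. }
 assert (2 / INR n < K).
 { apply (Rmult_lt_reg_r (INR n)); auto. replace (2 / INR n * INR n) with 2 by (field; lra). lra. }
 lra.
Qed.

Lemma small_zero (D m : R) : 0 < m -> (forall e, 0 < e < m -> Rabs D <= 2 * e) -> D = 0.
Proof. intros Hm H. destruct (Req_dec D 0) as [|HD]; auto. exfalso.
 pose proof (Rabs_pos_lt D HD).
 set (e := Rmin (m / 2) (Rabs D / 4)).
 assert (0 < e) by (unfold e; apply Rmin_glb_lt; lra).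
 assert (e <= m / 2) by (unfold e; apply Rmin_l). assert (e <= Rabs D / 4) by (unfold e; apply Rmin_r).
 pose proof (H e ltac:(lra)). lra. Qed.

Section Struct.
Variable g : R -> R.
Variable v : R.
Hypothesis Hc : conc g.
Hypothesis HB : forall x y, 0 <= x -> x < y -> y <= 1 -> 0 <= Sl g x y <= 1.
Hypothesis H0 : g 0 = 0.
Hypothesis H1 : g 1 = v.
Hypothesis HP : P8 g.

Lemma g_lip x y : 0 <= x -> x <= y -> y <= 1 -> 0 <= g y - g x <= y - x.
Proof. intros. destruct (Req_dec x y) as [E|E]. subst; lra.
 pose proof (HB x y H ltac:(lra) ltac:(lra)) as [A B]. unfold Sl in A, B.
 split. apply (Rmult_le_compat_r (y - x)) in A; [|lra]. replace ((g y - g x) / (y - x) * (y - x)) with (g y - g x) in A by (field; lra). lra.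
 apply (Rmult_le_compat_r (y - x)) in B; [|lra]. replace ((g y - g x) / (y - x) * (y - x)) with (g y - g x) in B by (field; lra). lra. Qed.

Lemma Sl_val x y (al b0 : R) : x <> y -> g x = b0 + al * x -> g y = b0 + al * y -> Sl g x y = al.
Proof. intros Hxy Ex Ey. unfold Sl. rewrite Ex, Ey. field. lra. Qed.

Lemma all_slopes_eq (Lo Up : R) : Lo < Up ->
  (forall p q r s, Lo < p -> p < q -> q <= r -> r < s -> s < Up -> Sl g p q = Sl g r s) ->
  forall x y, Lo < x -> x < y -> y < Up -> Sl g x y = Sl g (Lo + (Up - Lo) / 3) (Lo + 2 * (Up - Lo) / 3).
Proof. intros HLR H x y Hx Hxy Hy.
 set (t := (Rmax y (Lo + 2 * (Up - Lo) / 3) + Up) / 2). set (t' := (t + Up) / 2).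
 pose proof (Rmax_l y (Lo + 2 * (Up - Lo) / 3)). pose proof (Rmax_r y (Lo + 2 * (Up - Lo) / 3)).
 assert (Rmax y (Lo + 2 * (Up - Lo) / 3) < Up) by (apply Rmax_lub_lt; lra).
 rewrite (H x y t t') by (unfold t', t; lra).
 rewrite (H (Lo + (Up - Lo) / 3) (Lo + 2 * (Up - Lo) / 3) t t') by (unfold t', t; lra). reflexivity. Qed.

Lemma lin_closed (Lo Up : R) (be : R) : 0 <= Lo -> Lo < Up -> Up <= 1 -> 0 <= be <= 1 ->
  (forall x y, Lo < x -> x < y -> y < Up -> g y - g x = be * (y - x)) ->
  forall x, Lo <= x <= Up -> g x = g Lo + be * (x - Lo).
Proof. intros HL HLR HR Hbe H.
 assert (Hin : forall x, Lo < x < Up -> g x = g Lo + be * (x - Lo)).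
 { intros x Hx. assert (g x - g Lo - be * (x - Lo) = 0); [|lra].
   apply (small_zero _ (x - Lo)). lra. intros e He.
   pose proof (H (Lo + e) x ltac:(lra) ltac:(lra) ltac:(lra)).
   pose proof (g_lip Lo (Lo + e) HL ltac:(lra) ltac:(lra)).
   apply Rabs_le. nra. }
 intros x Hx. destruct (Req_dec x Lo) as [E|E]. subst; ring.
 destruct (Req_dec x Up) as [E'|E']. 2: apply Hin; lra.
 subst x. assert (g Up - g Lo - be * (Up - Lo) = 0); [|lra].
 apply (small_zero _ (Up - Lo)). lra. intros e He.
 pose proof (Hin (Up - e) ltac:(lra)).
 pose proof (g_lip (Up - e) Up ltac:(lra) ltac:(lra) HR).
 apply Rabs_le. nra. Qed.

Lemma lin_of_P (Lo Up : R) : 0 <= Lo -> Lo < Up -> Up <= 1 ->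
  (forall p q r s, Lo < p -> p < q -> q <= r -> r < s -> s < Up -> Sl g p q = Sl g r s) ->
  exists be, 0 <= be <= 1 /\ forall x, Lo <= x <= Up -> g x = g Lo + be * (x - Lo).
Proof. intros HL HLR HR H. exists (Sl g (Lo + (Up - Lo) / 3) (Lo + 2 * (Up - Lo) / 3)). split.
 apply HB; lra. apply lin_closed; auto. apply HB; lra.
 intros x y Hx Hxy Hy. rewrite <- (all_slopes_eq Lo Up HLR H x y Hx Hxy Hy). unfold Sl. field. lra. Qed.

Lemma structure : (forall u, I01 u -> g u = u * v) \/ (forall u, I01 u -> g u = Rmin u v).
Proof.
 destruct (classic (exists u1, I01 u1 /\ g u1 < u1 /\ g u1 < v)) as [[u1 [Hu1 [A B]]] | N].
 - left. unfold I01 in Hu1.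
   assert (Hu0 : 0 < u1). { destruct (Req_dec u1 0) as [E|E]; [subst; lra|lra]. }
   assert (Hu2 : u1 < 1). { destruct (Req_dec u1 1) as [E|E]; [subst; lra|lra]. }
   destruct (lin_of_P u1 1 ltac:(lra) Hu2 ltac:(lra)) as [be [Hbe Hr]].
   { intros p q r s Hp Hpq Hqr Hrs Hs.
     pose proof (chord_mono g Hc p q r s ltac:(lra) Hpq Hrs ltac:(lra) ltac:(lra) ltac:(lra)).
     destruct (Req_dec (Sl g p q) (Sl g r s)) as [|Hne]; auto. exfalso.
     destruct (HP 0 u1 p q r s ((s + 1) / 2) 1) as [Z|Z]; try lra.
     pose proof (HB ((s + 1) / 2) 1 ltac:(lra) ltac:(lra) ltac:(lra)).
     assert (Sl g 0 u1 < 1). { unfold Sl. rewrite H0. apply (Rmult_lt_reg_r u1); auto.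
       replace ((g u1 - 0) / (u1 - 0) * u1) with (g u1) by (field; lra). lra. }
     lra. }
   destruct (lin_of_P 0 u1 ltac:(lra) Hu0 ltac:(lra)) as [al [Hal Hl]].
   { intros p q r s Hp Hpq Hqr Hrs Hs.
     pose proof (chord_mono g Hc p q r s ltac:(lra) Hpq Hrs ltac:(lra) ltac:(lra) ltac:(lra)).
     destruct (Req_dec (Sl g p q) (Sl g r s)) as [|Hne]; auto. exfalso.
     destruct (HP 0 (p / 2) p q r s u1 1) as [Z|Z]; try lra.
     pose proof (HB 0 (p / 2) ltac:(lra) ltac:(lra) ltac:(lra)).
     assert (0 < Sl g u1 1). { unfold Sl. rewrite H1. apply Rdiv_lt_0_compat; lra. }
     lra. }
   rewrite H0 in Hl.
   assert (Ea : Sl g (u1 / 2) u1 = al) by (apply (Sl_val _ _ al 0); [lra|rewrite Hl; lra|rewrite Hl; lra]).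
   assert (Ea' : Sl g 0 (u1 / 4) = al) by (apply (Sl_val _ _ al 0); [lra|rewrite Hl; lra|rewrite Hl; lra]).
   assert (Eb : Sl g u1 ((1 + u1) / 2) = be) by (apply (Sl_val _ _ be (g u1 - be * u1)); [lra|rewrite Hr; lra|rewrite Hr; lra]).
   assert (Eb' : Sl g ((3 + u1) / 4) 1 = be) by (apply (Sl_val _ _ be (g u1 - be * u1)); [lra|rewrite Hr; lra|rewrite Hr; lra]).
   pose proof (chord_mono g Hc (u1 / 2) u1 u1 ((1 + u1) / 2) ltac:(lra) ltac:(lra) ltac:(lra) ltac:(lra) ltac:(lra) ltac:(lra)).
   assert (Hal1 : al < 1). { pose proof (Hl u1 ltac:(lra)). nra. }
   destruct (HP 0 (u1 / 4) (u1 / 2) u1 u1 ((1 + u1) / 2) ((3 + u1) / 4) 1) as [Z|Z]; try lra.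
   + assert (Hab : be = al) by lra. rewrite Hab in Hr.
     assert (Hg : forall x, 0 <= x <= 1 -> g x = al * x).
     { intros x Hx. destruct (Rle_dec x u1). rewrite Hl; [ring|lra]. rewrite Hr by lra. rewrite (Hl u1) by lra. ring. }
     assert (Hav : al = v) by (rewrite <- H1, Hg; lra).
     intros u Hu. rewrite Hg by auto. rewrite Hav; ring.
 - right. intros u Hu. unfold I01 in Hu.
   pose proof (g_lip 0 u ltac:(lra) ltac:(lra) ltac:(lra)). pose proof (g_lip u 1 ltac:(lra) ltac:(lra) ltac:(lra)).
   assert (~ (g u < u /\ g u < v)) by (intros Z; apply N; exists u; unfold I01; auto).
   unfold Rmin. destruct (Rle_dec u v); lra.
Qed.
End Struct.

Definition row (C X : R -> R -> R) v := forall u, I01 u -> C u v = X u v.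

Section Eq.
Variable C : R -> R -> R.
Hypothesis HC : is_copula C.

Lemma DSI_zero : is_SI C -> xi C = Rabs (rho C) -> forall v, 0 < v < 1 -> DSI C v = 0.
Proof. intros HS Heq. assert (Hm : monoC C) by (left; auto).
 pose proof (ineq_SI C HC Hm HS) as Hi.
 assert (xi C = rho C). { pose proof (Rabs_pos (rho C)). rewrite Rabs_pos_eq in Heq; lra. }
 destruct (RInt_DSI C HC Hm) as [E1 E2].
 apply zero_pt; auto.
 - rewrite E2. lra.
 - intros v Hv. pose proof (ptw_SI C HC v HS ltac:(unfold I01; lra)). unfold DSI. lra.
 - intros v w Hv Hvw Hw. unfold DSI.
   pose proof (Ifun_mono C HC Hm v w ltac:(unfold I01; lra) ltac:(unfold I01; lra) Hvw).
   pose proof (Jfun_lip C HC v w ltac:(unfold I01; lra) ltac:(unfold I01; lra) Hvw).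
   nra.
Qed.

Lemma DSD_zero : is_SD C -> xi C = Rabs (rho C) -> forall v, 0 < v < 1 -> DSD C v = 0.
Proof. intros HS Heq. assert (Hm : monoC C) by (right; auto).
 pose proof (ineq_SD C HC Hm HS) as Hi.
 assert (xi C = - rho C). { pose proof (Rabs_pos (rho C)). unfold Rabs in Heq. destruct (Rcase_abs (rho C)); lra. }
 destruct (RInt_DSD C HC Hm) as [E1 E2].
 apply zero_pt; auto.
 - rewrite E2. lra.
 - intros v Hv. pose proof (ptw_SD C HC v HS ltac:(unfold I01; lra)). unfold DSD. lra.
 - intros v w Hv Hvw Hw. unfold DSD.
   pose proof (Ifun_mono C HC Hm v w ltac:(unfold I01; lra) ltac:(unfold I01; lra) Hvw).
   pose proof (Jfun_mono C HC v w ltac:(unfold I01; lra) ltac:(unfold I01; lra) Hvw).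
   nra.
Qed.

Lemma row_SI : is_SI C -> xi C = Rabs (rho C) -> forall v, 0 < v < 1 -> row C Pi v \/ row C M v.
Proof. intros HS Heq v Hv. assert (Hm : monoC C) by (left; auto).
 assert (Hv' : I01 v) by (unfold I01; lra).
 pose proof (DSI_zero HS Heq v Hv) as HD. unfold DSI in HD.
 assert (HP : P8 (fun s => C s v)).
 { apply P8_of_small. apply conc_SI; auto. intros; apply Sl_bounds; auto.
   intros n Hn. pose proof (perv_SI C HC v n Hv' (conc_SI C v HS Hv') Hn). unfold Ifun, Jfun in HD. lra. }
 assert (G0 : C 0 v = 0) by (destruct HC as (_ & _ & Hg & _); apply Hg; auto).
 assert (G1 : C 1 v = v) by (destruct HC as (_ & _ & _ & _ & Hm2 & _); apply Hm2; auto).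
 destruct (structure (fun s => C s v) v (conc_SI C v HS Hv') (fun x y => Sl_bounds C HC v x y Hv') G0 G1 HP) as [A|A].
 - left. intros u Hu. rewrite A; auto.
 - right. intros u Hu. rewrite A; auto.
Qed.

Lemma row_SD : is_SD C -> xi C = Rabs (rho C) -> forall v, 0 < v < 1 -> row C Pi v \/ row C W v.
Proof. intros HS Heq v Hv. assert (Hm : monoC C) by (right; auto).
 assert (Hv' : I01 v) by (unfold I01; lra).
 pose proof (DSD_zero HS Heq v Hv) as HD. unfold DSD in HD.
 assert (HP : P8 (fun u => v - C (1 - u) v)).
 { apply P8_of_small. apply conc_refl; auto. intros; apply Sl_refl; auto.
   intros n Hn. pose proof (perv_SD C HC v n Hv' (conc_SD C v HS Hv') Hn). unfold Ifun, Jfun in HD. lra. }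
 assert (G0 : v - C (1 - 0) v = 0).
 { destruct HC as (_ & _ & _ & _ & Hm2 & _). replace (1 - 0) with 1 by ring. rewrite Hm2; auto. ring. }
 assert (G1 : v - C (1 - 1) v = v).
 { destruct HC as (_ & _ & Hg & _). replace (1 - 1) with 0 by ring. rewrite Hg; auto. ring. }
 destruct (structure (fun u => v - C (1 - u) v) v (conc_refl C v HS Hv') (fun x y => Sl_refl C HC v x y Hv') G0 G1 HP) as [A|A].
 - left. intros u Hu. unfold I01 in Hu. pose proof (A (1 - u) ltac:(unfold I01; lra)).
   replace (1 - (1 - u)) with u in H by ring. unfold Pi. nra.
 - right. intros u Hu. unfold I01 in Hu. pose proof (A (1 - u) ltac:(unfold I01; lra)).
   replace (1 - (1 - u)) with u in H by ring. unfold W. unfold Rmin in H. unfold Rmax.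
   destruct (Rle_dec (1 - u) v); destruct (Rle_dec (u + v - 1) 0); lra.
Qed.

Lemma conflict_M_Pi v1 v2 : 0 < v1 < 1 -> 0 < v2 < 1 -> row C M v1 -> row C Pi v2 -> False.
Proof. intros H1 H2 R1 R2. destruct HC as (_ & _ & _ & _ & _ & Hinc).
 unfold row, M, Pi in *.
 destruct (Rlt_dec v1 v2) as [L|L]; [|destruct (Rlt_dec v2 v1) as [L'|L']].
 - pose proof (Hinc 0 v1 v1 v2 ltac:(unfold I01; lra) ltac:(unfold I01; lra) ltac:(unfold I01; lra) ltac:(unfold I01; lra) ltac:(lra) ltac:(lra)).
   rewrite R1, R2, R2, R1 in H by (unfold I01; lra). unfold Rmin in H.
   destruct (Rle_dec v1 v1); destruct (Rle_dec 0 v1); try lra. nra.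
 - pose proof (Hinc v1 1 v2 v1 ltac:(unfold I01; lra) ltac:(unfold I01; lra) ltac:(unfold I01; lra) ltac:(unfold I01; lra) ltac:(lra) ltac:(lra)).
   rewrite R1, R2, R1, R2 in H by (unfold I01; lra). unfold Rmin in H.
   destruct (Rle_dec 1 v1); destruct (Rle_dec v1 v1); try lra. nra.
 - assert (v1 = v2) by lra. subst. pose proof (R1 v2 ltac:(unfold I01; lra)). rewrite R2 in H by (unfold I01; lra).
   unfold Rmin in H. destruct (Rle_dec v2 v2); nra.
Qed.

Lemma conflict_W_Pi v1 v2 : 0 < v1 < 1 -> 0 < v2 < 1 -> row C W v1 -> row C Pi v2 -> False.
Proof. intros H1 H2 R1 R2. destruct HC as (_ & _ & _ & _ & _ & Hinc).
 unfold row, W, Pi in *.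
 destruct (Rlt_dec v1 v2) as [L|L]; [|destruct (Rlt_dec v2 v1) as [L'|L']].
 - pose proof (Hinc (1 - v1) 1 v1 v2 ltac:(unfold I01; lra) ltac:(unfold I01; lra) ltac:(unfold I01; lra) ltac:(unfold I01; lra) ltac:(lra) ltac:(lra)).
   rewrite R1, R2, R2, R1 in H by (unfold I01; lra). unfold Rmax in H.
   destruct (Rle_dec (1 + v1 - 1) 0); destruct (Rle_dec (1 - v1 + v1 - 1) 0); try lra. nra.
 - pose proof (Hinc 0 (1 - v1) v2 v1 ltac:(unfold I01; lra) ltac:(unfold I01; lra) ltac:(unfold I01; lra) ltac:(unfold I01; lra) ltac:(lra) ltac:(lra)).
   rewrite R1, R2, R1, R2 in H by (unfold I01; lra). unfold Rmax in H.
   destruct (Rle_dec (1 - v1 + v1 - 1) 0); destruct (Rle_dec (0 + v1 - 1) 0); try lra. nra.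
 - assert (v1 = v2) by lra. subst. pose proof (R1 (1 - v2) ltac:(unfold I01; lra)). rewrite R2 in H by (unfold I01; lra).
   unfold Rmax in H. destruct (Rle_dec (1 - v2 + v2 - 1) 0); nra.
Qed.

Lemma glue (X : R -> R -> R) : (forall u, I01 u -> X u 0 = 0) -> (forall u, I01 u -> X u 1 = u) ->
  (forall v1 v2, 0 < v1 < 1 -> 0 < v2 < 1 -> row C X v1 -> row C Pi v2 -> False) ->
  (forall v, 0 < v < 1 -> row C Pi v \/ row C X v) ->
  eq_on_square C Pi \/ eq_on_square C X.
Proof. intros HX0 HX1 Hconf Hrow.
 assert (Edge : forall Y, (forall u, I01 u -> Y u 0 = 0) -> (forall u, I01 u -> Y u 1 = u) ->
   (forall v, 0 < v < 1 -> row C Y v) -> eq_on_square C Y).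
 { intros Y H0 H1 Hr u v Hu Hv. destruct HC as (_ & Hg1 & _ & Hm1 & _).
   destruct (Req_dec v 0) as [E|E]. subst. rewrite Hg1, H0; auto.
   destruct (Req_dec v 1) as [E'|E']. subst. rewrite Hm1, H1; auto.
   apply Hr; auto. unfold I01 in Hv; lra. }
 destruct (classic (forall v, 0 < v < 1 -> row C Pi v)) as [A|A].
 - left. apply Edge; auto. intros; unfold Pi; ring. intros; unfold Pi; ring.
 - right. apply not_all_ex_not in A. destruct A as [v1 A].
   assert (Hv1 : 0 < v1 < 1) by (destruct (classic (0 < v1 < 1)); auto; exfalso; apply A; intros; contradiction).
   assert (B : row C X v1) by (destruct (Hrow v1 Hv1); auto; exfalso; apply A; auto).
   apply Edge; auto. intros v2 Hv2. destruct (Hrow v2 Hv2) as [P|P]; auto. exfalso. apply (Hconf v1 v2); auto.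
Qed.

Lemma eq_dir : monoC C -> xi C = Rabs (rho C) -> eq_on_square C W \/ eq_on_square C Pi \/ eq_on_square C M.
Proof. intros [HS|HS] Heq.
 - assert (A1 : forall u, I01 u -> M u 0 = 0) by (intros u Hu; unfold M, Rmin, I01 in *; destruct (Rle_dec u 0); lra).
   assert (A2 : forall u, I01 u -> M u 1 = u) by (intros u Hu; unfold M, Rmin, I01 in *; destruct (Rle_dec u 1); lra).
   assert (A3 : forall v1 v2, 0 < v1 < 1 -> 0 < v2 < 1 -> row C M v1 -> row C Pi v2 -> False)
     by (intros v1 v2 a b c d; exact (conflict_M_Pi v1 v2 a b c d)).
   destruct (glue M A1 A2 A3 (row_SI HS Heq)) as [A|A]; [right; left|right; right]; auto.
 - assert (A1 : forall u, I01 u -> W u 0 = 0) by (intros u Hu; unfold W, Rmax, I01 in *; destruct (Rle_dec (u + 0 - 1) 0); lra).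
   assert (A2 : forall u, I01 u -> W u 1 = u) by (intros u Hu; unfold W, Rmax, I01 in *; destruct (Rle_dec (u + 1 - 1) 0); lra).
   assert (A3 : forall v1 v2, 0 < v1 < 1 -> 0 < v2 < 1 -> row C W v1 -> row C Pi v2 -> False)
     by (intros v1 v2 a b c d; exact (conflict_W_Pi v1 v2 a b c d)).
   destruct (glue W A1 A2 A3 (row_SD HS Heq)) as [A|A]; [right; left|left]; auto.
Qed.
End Eq.

Ltac req := match goal with |- ?a = ?b => change (@eq R a b) end.

Lemma Derive_loc_eq (f g : R -> R) t a b : a < t < b -> (forall y, a < y < b -> f y = g y) -> Derive f t = Derive g t.
Proof. intros Ht H. apply Derive_ext_loc. apply (locally_interval _ t a b); simpl; try lra. intros; apply H; lra. Qed.

Lemma xi_ext C X : eq_on_square C X -> xi C = xi X.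
Proof. intros H. unfold xi.
 assert (E : RInt (fun v => RInt (fun t => (d1 C t v)^2) 0 1) 0 1 = RInt (fun v => RInt (fun t => (d1 X t v)^2) 0 1) 0 1).
 { apply RInt_ext. intros v Hv. rewrite Rmin_left, Rmax_right in Hv by lra. apply RInt_ext. intros t Ht.
   rewrite Rmin_left, Rmax_right in Ht by lra. unfold d1. rewrite (Derive_loc_eq _ (fun s => X s v) t 0 1); auto.
   intros; apply H; unfold I01; lra. }
 rewrite E. reflexivity. Qed.

Lemma rho_ext C X : eq_on_square C X -> rho C = rho X.
Proof. intros H. unfold rho.
 assert (E : RInt (fun v => RInt (fun u => C u v) 0 1) 0 1 = RInt (fun v => RInt (fun u => X u v) 0 1) 0 1).
 { apply RInt_ext. intros v Hv. rewrite Rmin_left, Rmax_right in Hv by lra. apply RInt_ext. intros t Ht.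
   rewrite Rmin_left, Rmax_right in Ht by lra. apply H; unfold I01; lra. }
 rewrite E. reflexivity. Qed.

Lemma RInt_ext01 (f g : R -> R) a b : a <= b -> (forall x, a < x < b -> f x = g x) -> RInt f a b = RInt g a b.
Proof. intros Hab H. apply RInt_ext. intros x Hx. rewrite Rmin_left, Rmax_right in Hx by lra. apply H; auto. Qed.

Lemma ex_RInt_ext01 (f g : R -> R) a b : a <= b -> (forall x, a < x < b -> f x = g x) -> ex_RInt g a b -> ex_RInt f a b.
Proof. intros Hab H. apply ex_RInt_ext. intros x Hx. rewrite Rmin_left, Rmax_right in Hx by lra. symmetry; apply H; auto. Qed.

Lemma pw (f f1 f2 : R -> R) a : 0 < a < 1 -> (forall t, 0 < t < a -> f t = f1 t) -> (forall t, a < t < 1 -> f t = f2 t) ->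
  ex_RInt f1 0 a -> ex_RInt f2 a 1 -> RInt f 0 1 = RInt f1 0 a + RInt f2 a 1.
Proof. intros Ha H1 H2 E1 E2.
 rewrite (RInt_Chasles_R f 0 a 1).
 - rewrite (RInt_ext01 f f1 0 a), (RInt_ext01 f f2 a 1); auto; lra.
 - apply (ex_RInt_ext01 f f1 0 a); auto; lra.
 - apply (ex_RInt_ext01 f f2 a 1); auto; lra. Qed.

Lemma RInt_pol (p P : R -> R) a b : (forall x, is_derive P x (p x)) -> (forall x, ex_derive p x) ->
  ex_RInt p a b /\ RInt p a b = P b - P a.
Proof. apply RInt_poly_gen. Qed.

Lemma xi_Pi : xi Pi = 0.
Proof. unfold xi.
 rewrite (RInt_ext01 _ (fun v => v^2) 0 1).
 - destruct (RInt_pol (fun v => v^2) (fun v => v^3/3) 0 1) as [_ E].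
   + intros x; auto_derive; auto; req; field.
   + intros x; auto_derive; auto.
   + rewrite E. req. field.
 - lra.
 - intros v Hv. rewrite (RInt_ext01 _ (fun _ => v^2) 0 1). rewrite RInt_const_R. ring. lra.
   intros t Ht. unfold d1, Pi. f_equal. apply is_derive_unique. auto_derive; auto. req; ring.
Qed.

Lemma rho_Pi : rho Pi = 0.
Proof. unfold rho.
 rewrite (RInt_ext01 _ (fun v => v / 2) 0 1).
 - destruct (RInt_pol (fun v => v / 2) (fun v => v^2/4) 0 1) as [_ E].
   + intros x; auto_derive; auto; req; field.
   + intros x; auto_derive; auto.
   + rewrite E. req. field.
 - lra.
 - intros v Hv. unfold Pi. destruct (RInt_pol (fun u => u * v) (fun u => u^2 * v / 2) 0 1) as [_ E].
   + intros x; auto_derive; auto; req; field.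
   + intros x; auto_derive; auto.
   + rewrite E. req. field.
Qed.

Lemma d1_M_lt t v : 0 < t < v -> d1 M t v = 1.
Proof. intros H. unfold d1, M. rewrite (Derive_loc_eq _ (fun s => s) t (t - 1) v); [|lra|].
 apply Derive_id. intros y Hy. unfold Rmin. destruct (Rle_dec y v); lra. Qed.
Lemma d1_M_gt t v : v < t -> d1 M t v = 0.
Proof. intros H. unfold d1, M. rewrite (Derive_loc_eq _ (fun s => v) t v (t + 1)); [|lra|].
 apply Derive_const. intros y Hy. unfold Rmin. destruct (Rle_dec y v); lra. Qed.

Lemma xi_M : xi M = 1.
Proof. unfold xi.
 rewrite (RInt_ext01 _ (fun v => v) 0 1).
 - destruct (RInt_pol (fun v => v) (fun v => v^2/2) 0 1) as [_ E].
   + intros x; auto_derive; auto; req; field.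
   + intros x; auto_derive; auto.
   + rewrite E. req. field.
 - lra.
 - intros v Hv. rewrite (pw _ (fun _ => 1) (fun _ => 0) v); auto.
   + rewrite !RInt_const_R. ring.
   + intros t Ht. rewrite d1_M_lt; [ring|lra].
   + intros t Ht. rewrite d1_M_gt; [ring|lra].
   + apply ex_RInt_const.
   + apply ex_RInt_const.
Qed.

Lemma rho_M : rho M = 1.
Proof. unfold rho.
 rewrite (RInt_ext01 _ (fun v => v - v^2/2) 0 1).
 - destruct (RInt_pol (fun v => v - v^2/2) (fun v => v^2/2 - v^3/6) 0 1) as [_ E].
   + intros x; auto_derive; auto; req; field.
   + intros x; auto_derive; auto.
   + rewrite E. req. field.
 - lra.
 - intros v Hv. destruct (RInt_pol (fun u => u) (fun u => u^2/2) 0 v) as [E1 E2].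
   + intros x; auto_derive; auto; req; field.
   + intros x; auto_derive; auto.
   + rewrite (pw _ (fun u => u) (fun _ => v) v); auto.
     * rewrite E2, RInt_const_R. req. field.
     * intros t Ht. unfold M, Rmin. destruct (Rle_dec t v); lra.
     * intros t Ht. unfold M, Rmin. destruct (Rle_dec t v); lra.
     * apply ex_RInt_const.
Qed.

Lemma d1_W_lt t v : t < 1 - v -> d1 W t v = 0.
Proof. intros H. unfold d1, W. rewrite (Derive_loc_eq _ (fun s => 0) t (t - 1) (1 - v)); [|lra|].
 apply Derive_const. intros y Hy. unfold Rmax. destruct (Rle_dec (y + v - 1) 0); lra. Qed.
Lemma d1_W_gt t v : 1 - v < t -> d1 W t v = 1.
Proof. intros H. unfold d1, W. rewrite (Derive_loc_eq _ (fun s => s + v - 1) t (1 - v) (t + 1)); [|lra|].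
 apply is_derive_unique. auto_derive; auto. intros y Hy. unfold Rmax. destruct (Rle_dec (y + v - 1) 0); lra. Qed.

Lemma xi_W : xi W = 1.
Proof. unfold xi.
 rewrite (RInt_ext01 _ (fun v => v) 0 1).
 - destruct (RInt_pol (fun v => v) (fun v => v^2/2) 0 1) as [_ E].
   + intros x; auto_derive; auto; req; field.
   + intros x; auto_derive; auto.
   + rewrite E. req. field.
 - lra.
 - intros v Hv. rewrite (pw _ (fun _ => 0) (fun _ => 1) (1 - v)); try lra.
   + rewrite !RInt_const_R. ring.
   + intros t Ht. rewrite d1_W_lt; [ring|lra].
   + intros t Ht. rewrite d1_W_gt; [ring|lra].
   + apply ex_RInt_const.
   + apply ex_RInt_const.
Qed.

Lemma rho_W : rho W = -1.
Proof. unfold rho.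
 rewrite (RInt_ext01 _ (fun v => v^2/2) 0 1).
 - destruct (RInt_pol (fun v => v^2/2) (fun v => v^3/6) 0 1) as [_ E].
   + intros x; auto_derive; auto; req; field.
   + intros x; auto_derive; auto.
   + rewrite E. req. field.
 - lra.
 - intros v Hv. destruct (RInt_pol (fun u => u + v - 1) (fun u => u^2/2 + (v - 1) * u) (1 - v) 1) as [E1 E2].
   + intros x; auto_derive; auto; req; field.
   + intros x; auto_derive; auto.
   + rewrite (pw _ (fun _ => 0) (fun u => u + v - 1) (1 - v)); try lra; auto.
     * rewrite E2, RInt_const_R. req. field.
     * intros t Ht. unfold W, Rmax. destruct (Rle_dec (t + v - 1) 0); lra.
     * intros t Ht. unfold W, Rmax. destruct (Rle_dec (t + v - 1) 0); lra.
     * apply ex_RInt_const.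
Qed.

Lemma rev_dir C : eq_on_square C W \/ eq_on_square C Pi \/ eq_on_square C M -> xi C = Rabs (rho C).
Proof. intros [H|[H|H]]; rewrite (xi_ext C _ H), (rho_ext C _ H).
 - rewrite xi_W, rho_W. rewrite Rabs_left by lra. ring.
 - rewrite xi_Pi, rho_Pi. rewrite Rabs_R0. reflexivity.
 - rewrite xi_M, rho_M. rewrite Rabs_pos_eq by lra. reflexivity.
Qed.


Theorem theorem1p3 (C : R -> R -> R) (HC : is_copula C)
  (Hmon : is_SI C \/ is_SD C) :
  xi C <= Rabs (rho C) /\
  (xi C = Rabs (rho C) <->
     (eq_on_square C W \/ eq_on_square C Pi \/ eq_on_square C M)).
Proof.
  split.
  - exact (ineq_main C HC Hmon).
  - split.
    + exact (eq_dir C HC Hmon).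
    + exact (rev_dir C).
Qed.
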